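(* Let $\mathcal{R}$ be a left-linear almost parallel closed TRS. If $t \;{}_{\mathcal{R}}\!\overset{P_1}{\Leftarrow}\; s \overset{P_2}{\Rightarrow}_\mathcal{R} u$, then (i) there exist $v_1$ and a set $P_1'$ of pairwise parallel positions with $t \to_\mathcal{R}^* v_1$, $u \overset{P_1'}{\Rightarrow}_\mathcal{R} v_1$ and $\mathcal{V}ar(v_1,P_1')\subseteq\mathcal{V}ar(s,P_1)$; and (ii) there exist $v_2$ and a set $P_2'$ of pairwise parallel positions with $t \overset{P_2'}{\Rightarrow}_\mathcal{R} v_2$, $u\to_\mathcal{R}^* v_2$ and $\mathcal{V}ar(v_2,P_2')\subseteq\mathcal{V}ar(s,P_2)$.
   Context: Terms over signature $\mathcal{F}$ and variables $\mathcal{V}$; a TRS is a set of rules $\ell\to r$ with $\ell\notin\mathcal{V}$, $\mathcal{V}ar(r)\subseteq\mathcal{V}ar(\ell)$; left-linear means no variable occurs twice in any left-hand side. Positions are sequences of positive integers, $\epsilon$ the root; $p,q$ are parallel if neither is a prefix of the other; $\mathcal{P}os_\mathcal{F}(t)$ are the function-symbol positions of $t$. Parallel step: for a set $P$ of pairwise parallel positions of $s$, $s \overset{P}{\Rightarrow}_\mathcal{R} t$ iff for every $p\in P$ there are a rule $\ell\to r\in\mathcal{R}$ and substitution $\mu$ with $s|_p=\ell\mu$, $t|_p=r\mu$, and $t=s[t|_p]_{p\in P}$; $s\Rightarrow_\mathcal{R}t$ if this holds for some $P$; $t\;{}_{\mathcal{R}}\!\overset{P}{\Leftarrow}\;s$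 means $s\overset{P}{\Rightarrow}_\mathcal{R}t$. $\mathcal{V}ar(t,P)=\bigcup_{p\in P}\mathcal{V}ar(t|_p)$. Critical peak: if $\ell_1\to r_1$ and $\ell_2\to r_2$ are variants (renamings) of rules of $\mathcal{R}$ with no common variables, $p\in\mathcal{P}os_\mathcal{F}(\ell_2)$, $\sigma$ a most general unifier of $\ell_1$ and $\ell_2|_p$, and (if $p=\epsilon$) $\ell_1\to r_1$ is not a variant of $\ell_2\to r_2$, then $(\ell_2\sigma)[r_1\sigma]_p \xleftarrow{p} \ell_2\sigma\xrightarrow{\epsilon} r_2\sigma$ is a critical peak and $((\ell_2\sigma)[r_1\sigma]_p, r_2\sigma)$ a critical pair at position $p$. $\mathcal{R}$ is almost parallel closed if every critical pair $(t,u)$ at position $p=\epsilon$ satisfies $t\Rightarrow_\mathcal{R}\cdot\leftarrow_\mathcal{R}^* u$ (i.e. $t\Rightarrow_\mathcal{R} w$ and $u\to^*_\mathcal{R} w$ for some $w$), and every critical pair $(t,u)$ at a position $p\neq\epsilon$ satisfies $t\Rightarrow_\mathcal{R} u$. *)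

(* Defs.v *)
From Stdlib Require Import List Relations.
Import ListNotations.

Section TRS.
Context {F V : Type}.

(* Terms over function symbols F and variables V (unranked, as in IsaFoR). *)
Inductive term : Type :=
| Var (x : V)
| Fun (f : F) (ts : list term).

Fixpoint subst (sigma : V -> term) (t : term) : term :=
  match t with
  | Var x => sigma x
  | Fun f ts => Fun f (map (subst sigma) ts)
  end.

Fixpoint vars (t : term) : list V :=
  match t with
  | Var x => [x]
  | Fun f ts => flat_map vars ts
  end.

(* Positions: sequences of child indices (0-based here; the paper uses 1-based). *)
Definition pos := list nat.

Fixpoint subterm (t : term) (p : pos) {struct p} : option term :=
  match p with
  | [] => Some t
  | i :: q =>
      match t with
      | Var _ => None
      | Fun _ ts =>
          match nth_error ts i with
          | Some ti => subterm ti q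
          | None => None
          end
      end
  end.

(* t[u]_p ; unchanged if p is not a position of t *)
Fixpoint replace_at (p : pos) (t u : term) {struct p} : term :=
  match p with
  | [] => u
  | i :: q =>
      match t with
      | Var x => Var x
      | Fun f ts =>
          Fun f (map (fun jt => if Nat.eqb i (fst jt) then replace_at q (snd jt) u
                                else snd jt)
                     (combine (seq 0 (length ts)) ts))
      end
  end.

Definition prefix (p q : pos) : Prop := exists r, q = p ++ r.
Definition parallel (p q : pos) : Prop := ~ prefix p q /\ ~ prefix q p.
Definition pairwise_parallel (P : list pos) : Prop :=
  forall p q, In p P -> In q P -> p <> q -> parallel p q.

Definition fill_many (s : term) (l : list (pos * option term)) : term :=
  fold_left (fun acc po => match snd po with
                           | Some u => replace_at (fst po) acc u
                           | None => acc
                           end) l s.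

Definition rules := term -> term -> Prop.

Definition is_TRS (R : rules) : Prop :=
  forall l r, R l r ->
    (forall x, l <> Var x) /\ (forall x, In x (vars r) -> In x (vars l)).

Definition left_linear (R : rules) : Prop :=
  forall l r, R l r -> NoDup (vars l).

Definition rstep (R : rules) (s t : term) : Prop :=
  exists p l r mu, R l r /\ subterm s p = Some (subst mu l) /\
                   t = replace_at p s (subst mu r).

Definition rsteps (R : rules) : term -> term -> Prop := clos_refl_trans term (rstep R).

Definition par_step (R : rules) (P : list pos) (s t : term) : Prop :=
  pairwise_parallel P /\
  (forall p, In p P -> exists l r mu, R l r /\
       subterm s p = Some (subst mu l) /\ subterm t p = Some (subst mu r)) /\
  t = fill_many s (map (fun p => (p, subterm t p)) P).

Definition par_rstep (R : rules) (s t : term) : Prop :=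
  exists P, par_step R P s t.

Definition in_vars_at (t : term) (P : list pos) (x : V) : Prop :=
  exists p w, In p P /\ subterm t p = Some w /\ In x (vars w).

Definition renaming (rho : V -> V) : Prop :=
  exists rho', (forall x, rho' (rho x) = x) /\ (forall x, rho (rho' x) = x).

Definition variant (l1 r1 l2 r2 : term) : Prop :=
  exists rho, renaming rho /\
    l1 = subst (fun x => Var (rho x)) l2 /\ r1 = subst (fun x => Var (rho x)) r2.

Definition variant_of_rule (R : rules) (l r : term) : Prop :=
  exists l0 r0, R l0 r0 /\ variant l r l0 r0.

Definition is_mgu (sigma : V -> term) (a b : term) : Prop :=
  subst sigma a = subst sigma b /\
  forall tau, subst tau a = subst tau b ->
    exists delta, forall x, tau x = subst delta (sigma x).

Definition critical_pair (R : rules) (t u : term) (p : pos) : Prop :=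
  exists l1 r1 l2 r2 sigma l2p,
    variant_of_rule R l1 r1 /\ variant_of_rule R l2 r2 /\
    (forall x, In x (vars l1 ++ vars r1) -> ~ In x (vars l2 ++ vars r2)) /\
    subterm l2 p = Some l2p /\ (exists f ts, l2p = Fun f ts) /\
    is_mgu sigma l1 l2p /\
    (p = [] -> ~ variant l1 r1 l2 r2) /\
    t = replace_at p (subst sigma l2) (subst sigma r1) /\
    u = subst sigma r2.

Definition almost_parallel_closed (R : rules) : Prop :=
  forall t u p, critical_pair R t u p ->
    (p = [] -> exists w, par_rstep R t w /\ rsteps R u w) /\
    (p <> [] -> par_rstep R t u).

End TRS.
Arguments term : clear implicits.

(* Main.v *)
Require Import Defs.
From Stdlib Require Import List Relations ClassicalEpsilon Classical Arith Lia.
Import ListNotations.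

Definition mapi {A B} (k : nat) (g : nat -> A -> B) (l : list A) : list B :=
  map (fun jt => g (fst jt) (snd jt)) (combine (seq k (length l)) l).

Arguments mapi : simpl never.
Lemma mapi_nil {A B} k (g : nat -> A -> B) : mapi k g [] = [].
Proof. reflexivity. Qed.
Lemma mapi_cons {A B} k (g : nat -> A -> B) a l : mapi k g (a :: l) = g k a :: mapi (S k) g l.
Proof. reflexivity. Qed.

Lemma nth_error_mapi {A B} (g : nat -> A -> B) l : forall k j,
  nth_error (mapi k g l) j = option_map (g (k + j)) (nth_error l j).
Proof.
  induction l as [|a l IH]; intros k j; [destruct j; reflexivity|].
  rewrite mapi_cons. destruct j; simpl.
  - rewrite Nat.add_0_r; reflexivity.
  - rewrite IH. f_equal. f_equal. lia.
Qed.

Lemma length_mapi {A B} (g : nat -> A -> B) l : forall k, length (mapi k g l) = length l.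
Proof. induction l; intros; [reflexivity|]. rewrite mapi_cons; simpl; auto. Qed.

Lemma nth_error_Some_lt {A} (l : list A) j a : nth_error l j = Some a -> j < length l.
Proof. intro H. apply nth_error_Some. congruence. Qed.

Lemma nth_error_lt_Some {A} (l : list A) j : j < length l -> exists a, nth_error l j = Some a.
Proof. intro H. destruct (nth_error l j) eqn:E; eauto. apply nth_error_None in E; lia. Qed.

Lemma ex_list {A} (n : nat) (Q : nat -> A -> Prop) :
  (forall j, j < n -> exists a, Q j a) ->
  exists l, length l = n /\ forall j a, nth_error l j = Some a -> Q j a.
Proof.
  induction n as [|n IH]; intros H.
  - exists []; split; auto. intros j a E; destruct j; discriminate.
  - destruct IH as [l [Hl Hq]]. { intros j Hj; apply H; lia. }
    destruct (H n) as [a Ha]; [lia|].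
    exists (l ++ [a]); split. { rewrite length_app; simpl; lia. }
    intros j b E. destruct (Nat.lt_ge_cases j (length l)) as [Hj|Hj].
    + rewrite nth_error_app1 in E by lia. auto.
    + rewrite nth_error_app2 in E by lia.
      destruct (j - length l) eqn:E2; simpl in E; [|destruct n0; discriminate].
      inversion E; subst. replace j with (length l) by lia. auto.
Qed.

Lemma list_ext_nth {A} (l1 l2 : list A) :
  (forall j, nth_error l1 j = nth_error l2 j) -> l1 = l2.
Proof. apply nth_error_ext. Qed.

Lemma nth_le_sum l : forall j x, nth_error l j = Some x -> x <= list_sum l.
Proof.
  induction l; intros j x E; [destruct j; discriminate|].
  destruct j; simpl in *.
  - inversion E; lia.
  - specialize (IHl _ _ E); lia.
Qed.

Lemma sum_nth_le (a b : list nat) : length a = length b ->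
  (forall j x y, nth_error a j = Some x -> nth_error b j = Some y -> x <= y) ->
  list_sum a <= list_sum b.
Proof.
  revert b; induction a as [|x a IH]; intros [|y b] Hl H; simpl in *; try lia.
  assert (x <= y) by (apply (H 0); reflexivity).
  assert (list_sum a <= list_sum b). { apply IH; [lia|]. intros j; apply (H (S j)). }
  lia.
Qed.

Lemma sum_concat_map {A} (g : A -> nat) (L : list (list A)) :
  list_sum (map g (concat L)) = list_sum (map (fun l => list_sum (map g l)) L).
Proof.
  induction L; simpl; auto. rewrite map_app, list_sum_app, IHL; reflexivity.
Qed.

Lemma sum_remove {A} (dec : forall x y : A, {x = y} + {x <> y}) (g : A -> nat) l p :
  NoDup l -> In p l -> list_sum (map g l) = g p + list_sum (map g (remove dec p l)).
Proof.
  induction l as [|a l IH]; intros Hnd Hin; [destruct Hin|].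
  inversion Hnd; subst. simpl. destruct (dec p a) as [->|Hne].
  - rewrite notin_remove by auto. reflexivity.
  - destruct Hin as [->|Hin]; [congruence|]. simpl. rewrite (IH H2 Hin). lia.
Qed.

Lemma nodup_len_le {A} (dec : forall x y : A, {x = y} + {x <> y}) l1 l2 :
  incl l1 l2 -> length (nodup dec l1) <= length (nodup dec l2).
Proof.
  intro H. apply NoDup_incl_length; [apply NoDup_nodup|].
  intros x Hx. apply nodup_In. apply nodup_In in Hx. auto.
Qed.

Lemma nodup_len_lt {A} (dec : forall x y : A, {x = y} + {x <> y}) l1 l2 x :
  incl l1 l2 -> In x l2 -> ~ In x l1 -> length (nodup dec l1) < length (nodup dec l2).
Proof.
  intros H Hx Hn.
  assert (length (nodup dec l1) <= length (remove dec x (nodup dec l2))).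
  { apply NoDup_incl_length; [apply NoDup_nodup|].
    intros y Hy. apply nodup_In in Hy. apply in_in_remove.
    - intro; subst; auto.
    - apply nodup_In; auto. }
  pose proof (remove_length_lt dec (nodup dec l2) x). rewrite nodup_In in H1.
  specialize (H1 Hx). lia.
Qed.

Lemma NoDup_flat_map_disj {A B} (f : A -> list B) l :
  NoDup (flat_map f l) -> forall i j a b x, nth_error l i = Some a -> nth_error l j = Some b ->
  In x (f a) -> In x (f b) -> i = j.
Proof.
  induction l as [|c l IH]; intros Hnd i j a b x Ea Eb Ha Hb; [destruct i; discriminate|].
  simpl in Hnd.
  assert (Hdisj : forall y, In y (f c) -> ~ In y (flat_map f l)).
  { intros y Hy Hy2. apply in_split in Hy2. destruct Hy2 as [l1 [l2 E]]. rewrite E in Hnd.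
    rewrite app_assoc in Hnd. apply NoDup_remove_2 in Hnd. apply Hnd. apply in_or_app; left; apply in_or_app; auto. }
  apply NoDup_app_remove_l in Hnd as Hnd2.
  destruct i, j; simpl in Ea, Eb; auto.
  - inversion Ea; subst. exfalso. apply (Hdisj x Ha). apply in_flat_map. exists b; split; auto.
    eapply nth_error_In; eauto.
  - inversion Eb; subst. exfalso. apply (Hdisj x Hb). apply in_flat_map. exists a; split; auto.
    eapply nth_error_In; eauto.
  - f_equal. eapply IH; eauto.
Qed.

From Stdlib Require Import List Relations ClassicalEpsilon Classical Arith Lia.
Import ListNotations.

Section T.
Context {F V : Type}.
Notation tm := (term F V).
Implicit Types (t w u : tm) (ts us : list tm) (x y : V) (f : F) (p q : pos) (i j : nat).

Definition term_ind' (Q : tm -> Prop) (HV : forall x, Q (Var x))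
  (HF : forall f ts, (forall t, In t ts -> Q t) -> Q (Fun f ts)) : forall t, Q t :=
  fix go t := match t with
  | Var x => HV x
  | Fun f ts => HF f ts ((fix gol (l : list tm) : forall t, In t l -> Q t :=
       match l with
       | [] => fun t H => False_ind _ H
       | u :: l' => fun t H => match H with
                               | or_introl e => eq_ind u Q (go u) t e
                               | or_intror H' => gol l' t H'
                               end
       end) ts)
  end.

Fixpoint size (t : tm) : nat :=
  match t with Var _ => 1 | Fun _ ts => S (list_sum (map size ts)) end.

Lemma size_pos t : 1 <= size t.
Proof. destruct t; simpl; lia. Qed.

Lemma size_arg f ts t : In t ts -> size t < size (Fun f ts).
Proof.
  simpl. induction ts; intros H; [destruct H|]. destruct H as [->|H]; simpl; [lia|].
  specialize (IHts H). lia.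
Qed.

Lemma subst_comp (s d : V -> tm) t :
  subst d (subst s t) = subst (fun x => subst d (s x)) t.
Proof.
  induction t using term_ind'; simpl; auto. f_equal. rewrite map_map. apply map_ext_in. auto.
Qed.

Lemma subst_ext (s d : V -> tm) t : (forall x, In x (vars t) -> s x = d x) -> subst s t = subst d t.
Proof.
  induction t using term_ind'; simpl; intros Hx; auto. f_equal. apply map_ext_in.
  intros a Ha. apply H; auto. intros x Hx'. apply Hx. apply in_flat_map. eauto.
Qed.

Lemma subst_ext_inv (s d : V -> tm) t : subst s t = subst d t -> forall x, In x (vars t) -> s x = d x.
Proof.
  induction t using term_ind'; simpl; intros E y Hy.
  - destruct Hy as [->|[]]; auto.
  - inversion E as [E2]. apply in_flat_map in Hy. destruct Hy as [a [Ha Hy]].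
    apply (H a Ha); auto. clear -E2 Ha. induction ts; [destruct Ha|]. simpl in E2; inversion E2.
    destruct Ha as [->|Ha]; auto.
Qed.

Lemma subst_id (t : tm) : subst (fun x => Var x) t = t.
Proof.
  induction t using term_ind'; simpl; auto. f_equal. rewrite <- (map_id ts) at 2.
  apply map_ext_in. auto.
Qed.

Lemma vars_Fun f ts x : In x (vars (Fun f ts)) <-> exists t, In t ts /\ In x (vars t).
Proof. simpl. apply in_flat_map. Qed.

Lemma vars_subst (s : V -> tm) t y :
  In y (vars (subst s t)) <-> exists x, In x (vars t) /\ In y (vars (s x)).
Proof.
  induction t using term_ind'; simpl.
  - split; [intro; exists x; auto|]. intros [z [[->|[]] Hz]]; auto.
  - rewrite in_flat_map. split.
    + intros [a [Ha Hy]]. apply in_map_iff in Ha. destruct Ha as [b [<- Hb]].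
      apply H in Hy; auto. destruct Hy as [z [Hz Hy]]. exists z; split; auto.
      apply in_flat_map; eauto.
    + intros [z [Hz Hy]]. apply in_flat_map in Hz. destruct Hz as [b [Hb Hz]].
      exists (subst s b); split; [apply in_map; auto|]. apply H; eauto.
Qed.

Lemma vars_rename (rho : V -> V) t : vars (subst (fun x => Var (rho x)) t) = map rho (vars t).
Proof.
  induction t using term_ind'; simpl; auto. rewrite flat_map_concat_map, map_map.
  rewrite flat_map_concat_map, concat_map, map_map. f_equal. apply map_ext_in. auto.
Qed.

Lemma subterm_Fun f ts i q : subterm (Fun f ts) (i :: q) =
  match nth_error ts i with Some ti => subterm ti q | None => None end.
Proof. reflexivity. Qed.

Lemma replace_Fun f ts i q u : replace_at (i :: q) (Fun f ts) u =
  Fun f (mapi 0 (fun j tj => if Nat.eqb i j then replace_at q tj u else tj) ts).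
Proof. reflexivity. Qed.

Lemma subterm_vars t p w : subterm t p = Some w -> incl (vars w) (vars t).
Proof.
  revert t; induction p as [|i p IH]; intros t E; simpl in E.
  - inversion E; subst; apply incl_refl.
  - destruct t; [discriminate|]. destruct (nth_error ts i) eqn:E2; [|discriminate].
    intros x Hx. apply IH in E; auto. apply vars_Fun. exists t; split; auto.
    eapply nth_error_In; eauto.
Qed.

Lemma subterm_subst (s : V -> tm) t p w : subterm t p = Some w -> subterm (subst s t) p = Some (subst s w).
Proof.
  revert t; induction p as [|i p IH]; intros t E; simpl in E.
  - inversion E; subst; reflexivity.
  - destruct t; [discriminate|]. destruct (nth_error ts i) eqn:E2; [|discriminate].
    simpl. rewrite nth_error_map, E2. simpl. auto.
Qed.

Lemma subterm_app t p q : subterm t (p ++ q) =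
  match subterm t p with Some w => subterm w q | None => None end.
Proof.
  revert t; induction p as [|i p IH]; intros t; simpl; auto.
  destruct t; auto. destruct (nth_error ts i); auto.
Qed.

Lemma replace_subst (s : V -> tm) t p w u : subterm t p = Some w ->
  subst s (replace_at p t u) = replace_at p (subst s t) (subst s u).
Proof.
  revert t; induction p as [|i p IH]; intros t E; simpl in E; auto.
  destruct t; [discriminate|]. destruct (nth_error ts i) eqn:E2; [|discriminate].
  rewrite replace_Fun. change (subst s (Fun f ts)) with (Fun f (map (subst s) ts)). rewrite replace_Fun. change (subst s (Fun f ?l)) with (Fun f (map (subst s) l)). f_equal. apply list_ext_nth. intros j.
  rewrite nth_error_map, !nth_error_mapi, nth_error_map. simpl.
  destruct (nth_error ts j) eqn:E3; simpl; auto. f_equal.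
  destruct (Nat.eqb_spec i j); subst; auto. rewrite E3 in E2; inversion E2; subst. auto.
Qed.

Lemma subterm_replace_same t p w u : subterm t p = Some w -> subterm (replace_at p t u) p = Some u.
Proof.
  revert t; induction p as [|i p IH]; intros t E; simpl in E; auto.
  destruct t; [discriminate|]. destruct (nth_error ts i) eqn:E2; [|discriminate].
  rewrite replace_Fun, subterm_Fun, nth_error_mapi, E2. simpl. rewrite Nat.eqb_refl. eauto.
Qed.

Lemma prefix_cons i p q : prefix (i :: p) (i :: q) <-> prefix p q.
Proof. unfold prefix. split; intros [r E]; exists r; [inversion E|subst]; auto. Qed.

Lemma prefix_nil p : prefix [] p.
Proof. exists p; reflexivity. Qed.

Lemma subterm_replace_par t p q u : parallel p q -> subterm (replace_at p t u) q = subterm t q.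
Proof.
  revert t q; induction p as [|i p IH]; intros t q [H1 H2].
  - exfalso; apply H1, prefix_nil.
  - destruct q as [|j q]; [exfalso; apply H2, prefix_nil|].
    destruct t; [reflexivity|]. rewrite replace_Fun, !subterm_Fun, nth_error_mapi. simpl.
    destruct (nth_error ts j) eqn:E; simpl; auto.
    destruct (Nat.eqb_spec i j); subst; auto. apply IH. split; intro HH; [apply H1|apply H2]; apply prefix_cons; auto.
Qed.

Lemma vars_replace t p w u : subterm t p = Some w -> incl (vars (replace_at p t u)) (vars t ++ vars u).
Proof.
  revert t; induction p as [|i p IH]; intros t E; simpl in E.
  - simpl. intros x Hx; apply in_or_app; auto.
  - destruct t; [discriminate|]. destruct (nth_error ts i) eqn:E2; [|discriminate].
    rewrite replace_Fun. intros x Hx. apply vars_Fun in Hx. destruct Hx as [a [Ha Hx]].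
    apply In_nth_error in Ha. destruct Ha as [j Ha]. rewrite nth_error_mapi in Ha.
    destruct (nth_error ts j) eqn:E3; [|discriminate]. simpl in Ha. inversion Ha; subst.
    destruct (Nat.eqb_spec i j); subst.
    + rewrite E3 in E2; inversion E2; subst. apply IH in Hx; auto. apply in_app_or in Hx.
      destruct Hx; apply in_or_app; auto. left. apply vars_Fun. exists t; split; auto. eapply nth_error_In; eauto.
    + apply in_or_app; left. apply vars_Fun. exists t0; split; auto. eapply nth_error_In; eauto.
Qed.

End T.

From Stdlib Require Import List Relations ClassicalEpsilon Classical Arith Lia.
Import ListNotations.

Definition blocks (Ps : list (list pos)) : list pos :=
  concat (mapi 0 (fun j P => map (cons j) P) Ps).

Lemma in_blocks_k Ps : forall k p, In p (concat (mapi k (fun j P => map (cons j) P) Ps)) <->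
  exists j P q, nth_error Ps j = Some P /\ In q P /\ p = (k + j) :: q.
Proof.
  induction Ps as [|P0 Ps IH]; intros k p.
  - rewrite mapi_nil. simpl. split; [intros []|]. intros [j [P [q [E _]]]]; destruct j; discriminate.
  - rewrite mapi_cons. simpl. rewrite in_app_iff, IH. split.
    + intros [H|[j [P [q [E [Hq ->]]]]]].
      * apply in_map_iff in H. destruct H as [q [<- Hq]]. exists 0, P0, q. rewrite Nat.add_0_r. auto.
      * exists (S j), P, q. simpl. repeat split; auto. f_equal. lia.
    + intros [j [P [q [E [Hq ->]]]]]. destruct j; simpl in E.
      * inversion E; subst. left. rewrite Nat.add_0_r. apply in_map; auto.
      * right. exists j, P, q. repeat split; auto. f_equal. lia.
Qed.

Lemma in_blocks Ps p : In p (blocks Ps) <->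
  exists j P q, nth_error Ps j = Some P /\ In q P /\ p = j :: q.
Proof. unfold blocks. rewrite in_blocks_k. reflexivity. Qed.

Lemma NoDup_blocks_k Ps : forall k, (forall j P, nth_error Ps j = Some P -> NoDup P) ->
  NoDup (concat (mapi k (fun j P => map (cons j) P) Ps)).
Proof.
  induction Ps as [|P0 Ps IH]; intros k H.
  - rewrite mapi_nil; constructor.
  - rewrite mapi_cons. simpl. apply NoDup_app.
    + apply NoDup_map_NoDup_ForallPairs. { intros a b _ _ E; inversion E; auto. } apply (H 0); reflexivity.
    + apply IH. intros j; apply (H (S j)).
    + intros a Ha Hb. apply in_map_iff in Ha. destruct Ha as [q [<- _]].
      apply in_blocks_k in Hb. destruct Hb as [j [P [q' [_ [_ E]]]]]. inversion E; lia.
Qed.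

Lemma NoDup_blocks Ps : (forall j P, nth_error Ps j = Some P -> NoDup P) -> NoDup (blocks Ps).
Proof. apply NoDup_blocks_k. Qed.

Lemma blocks_nil_iff Ps : (forall j P, nth_error Ps j = Some P -> P = []) -> blocks Ps = [].
Proof.
  intro H. destruct (blocks Ps) as [|p l] eqn:E; auto. exfalso.
  assert (In p (blocks Ps)) by (rewrite E; left; auto).
  apply in_blocks in H0. destruct H0 as [j [P [q [E1 [Hq _]]]]]. rewrite (H _ _ E1) in Hq. destruct Hq.
Qed.

Lemma pdec : forall x y : pos, {x = y} + {x <> y}.
Proof. apply list_eq_dec, Nat.eq_dec. Qed.

Lemma remove_map_cons i q k P : remove pdec (i :: q) (map (cons k) P) =
  if Nat.eqb i k then map (cons k) (remove pdec q P) else map (cons k) P.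
Proof.
  destruct (Nat.eqb_spec i k) as [<-|Hne].
  - induction P as [|a P IH]; simpl; auto.
    destruct (pdec (i :: q) (i :: a)) as [E|E], (pdec q a) as [E'|E']; subst; try congruence.
    all: try (simpl; rewrite IH; reflexivity).
  - induction P as [|a P IH]; simpl; auto.
    destruct (pdec (i :: q) (k :: a)) as [E|_]; [inversion E; congruence|]. rewrite IH; auto.
Qed.

Lemma remove_blocks_k i q Ps : forall k,
  remove pdec (i :: q) (concat (mapi k (fun j P => map (cons j) P) Ps)) =
  concat (mapi k (fun j P => map (cons j) P) (mapi k (fun j P => if Nat.eqb i j then remove pdec q P else P) Ps)).
Proof.
  induction Ps as [|P0 Ps IH]; intros k; [reflexivity|].
  rewrite !mapi_cons. simpl. rewrite remove_app, IH, remove_map_cons. f_equal.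
  destruct (Nat.eqb i k); reflexivity.
Qed.

Lemma remove_blocks i q Ps : remove pdec (i :: q) (blocks Ps) =
  blocks (mapi 0 (fun j P => if Nat.eqb i j then remove pdec q P else P) Ps).
Proof. apply remove_blocks_k. Qed.

Lemma projP_blocks_aux (g : pos -> nat) Ps : forall k,
  list_sum (map g (concat (mapi k (fun j P => map (cons j) P) Ps))) =
  list_sum (mapi k (fun j P => list_sum (map (fun q => g (j :: q)) P)) Ps).
Proof.
  induction Ps as [|P0 Ps IH]; intros k; [reflexivity|].
  rewrite !mapi_cons. simpl. rewrite map_app, list_sum_app, IH, map_map. reflexivity.
Qed.

Section P.
Context {F V : Type}.
Notation tm := (term F V).
Implicit Types (t w u s : tm) (ts us : list tm) (x y : V) (f : F) (p q : pos) (i j : nat).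
Context (R : @rules F V).
Context (HTRS : is_TRS R).

Definition sz s p := match subterm s p with Some w => size w | None => 0 end.
Definition msz s (P : list pos) := list_sum (map (sz s) P).

Lemma msz_blocks f ts Ps : msz (Fun f ts) (blocks Ps) =
  list_sum (mapi 0 (fun j P => match nth_error ts j with Some tj => msz tj P | None => 0 end) Ps).
Proof.
  unfold msz, blocks. rewrite projP_blocks_aux. f_equal. apply list_ext_nth. intro j. unfold pos in *.
  rewrite !nth_error_mapi. destruct (nth_error Ps j); simpl; auto. f_equal.
  destruct (nth_error ts j) eqn:E.
  - unfold msz. f_equal. apply map_ext. intro q. unfold sz. rewrite subterm_Fun, E. reflexivity.
  - erewrite map_ext with (g := fun _ => 0). { clear; induction l; simpl; auto. }
    intro q; unfold sz; rewrite subterm_Fun, E; reflexivity.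
Qed.

Inductive pstep : list pos -> tm -> tm -> Prop :=
| PVar x : pstep [] (Var x) (Var x)
| PRoot l r mu : R l r -> pstep [[]] (subst mu l) (subst mu r)
| PFun f ts us Ps : length us = length ts -> length Ps = length ts ->
    (forall j tj uj Pj, nth_error ts j = Some tj -> nth_error us j = Some uj ->
       nth_error Ps j = Some Pj -> pstep Pj tj uj) ->
    pstep (blocks Ps) (Fun f ts) (Fun f us).

Lemma pstep_refl t : pstep [] t t.
Proof.
  induction t using term_ind'; [constructor|].
  rewrite <- (blocks_nil_iff (map (fun _ => []) ts)).
  - constructor; auto. { rewrite length_map; auto. }
    intros j tj uj Pj E1 E2 E3. rewrite E1 in E2; inversion E2; subst.
    rewrite nth_error_map, E1 in E3; inversion E3; subst. apply H. eapply nth_error_In; eauto.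
  - intros j P E. rewrite nth_error_map in E. destruct (nth_error ts j); inversion E; auto.
Qed.

Definition rs := rsteps R.

Lemma rstep_subst (d : V -> tm) a b : rstep R a b -> rstep R (subst d a) (subst d b).
Proof.
  intros [p [l [r [mu [Hr [E ->]]]]]]. exists p, l, r, (fun x => subst d (mu x)). split; auto.
  split.
  - rewrite <- subst_comp. apply subterm_subst; auto.
  - rewrite <- subst_comp. eapply replace_subst; eauto.
Qed.

Lemma rsteps_subst (d : V -> tm) a b : rs a b -> rs (subst d a) (subst d b).
Proof.
  induction 1. - apply rt_step, rstep_subst; auto. - apply rt_refl. - eapply rt_trans; eauto.
Qed.

Definition upd i b ts := mapi 0 (fun j tj => if Nat.eqb i j then b else tj) ts.

Lemma rstep_ctx f ts i a b : nth_error ts i = Some a -> rstep R a b ->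
  rstep R (Fun f ts) (Fun f (upd i b ts)).
Proof.
  intros E [p [l [r [mu [Hr [E2 ->]]]]]]. exists (i :: p), l, r, mu. split; auto. split.
  - rewrite subterm_Fun, E; auto.
  - rewrite replace_Fun. f_equal. unfold upd. apply list_ext_nth; intro j. rewrite !nth_error_mapi.
    destruct (nth_error ts j) eqn:E3; simpl; auto. destruct (Nat.eqb_spec i j); subst; auto.
    rewrite E in E3; inversion E3; auto.
Qed.

Lemma upd_upd i b c ts : upd i c (upd i b ts) = upd i c ts.
Proof.
  unfold upd. apply list_ext_nth; intro j. rewrite !nth_error_mapi. destruct (nth_error ts j); simpl; auto.
  destruct (Nat.eqb i j); auto.
Qed.

Lemma upd_same i a ts : nth_error ts i = Some a -> upd i a ts = ts.
Proof.
  intro E. unfold upd. apply list_ext_nth; intro j. rewrite !nth_error_mapi. destruct (nth_error ts j) eqn:E2; simpl; auto.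
  destruct (Nat.eqb_spec i j); subst; auto. rewrite E in E2; inversion E2; auto.
Qed.

Lemma nth_upd i b ts : i < length ts -> nth_error (upd i b ts) i = Some b.
Proof.
  intro H. unfold upd. rewrite nth_error_mapi. destruct (nth_error_lt_Some ts i H) as [a E]. rewrite E. simpl.
  rewrite Nat.eqb_refl; auto.
Qed.

Lemma rsteps_upd f a b : rs a b -> forall ts i, nth_error ts i = Some a -> rs (Fun f ts) (Fun f (upd i b ts)).
Proof.
  induction 1 as [a b H|a|a c b H1 IH1 H2 IH2]; intros ts i E.
  - apply rt_step. eapply rstep_ctx; eauto.
  - rewrite (upd_same i a ts E). apply rt_refl.
  - eapply rt_trans. { apply IH1; eauto. } rewrite <- (upd_upd i c b ts). apply IH2.
    apply nth_upd. eapply nth_error_Some_lt; eauto.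
Qed.

Lemma rsteps_args f ts us : length ts = length us ->
  (forall j a b, nth_error ts j = Some a -> nth_error us j = Some b -> rs a b) -> rs (Fun f ts) (Fun f us).
Proof.
  intros Hl H. assert (Hf : Forall2 rs ts us).
  { revert us Hl H. induction ts; intros [|b us] Hl H; simpl in Hl; try discriminate; constructor.
    - apply (H 0); reflexivity.
    - apply IHts; [lia|]. intros j; apply (H (S j)). }
  clear Hl H. assert (forall pre, rs (Fun f (pre ++ ts)) (Fun f (pre ++ us))).
  { induction Hf as [|a b ts us Hab Hf IH]; intros pre; [apply rt_refl|].
    apply rt_trans with (Fun f (pre ++ b :: ts)).
    - assert (E : upd (length pre) b (pre ++ a :: ts) = pre ++ b :: ts).
      { unfold upd. apply list_ext_nth; intro j. rewrite nth_error_mapi. simpl.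
        destruct (Nat.lt_ge_cases j (length pre)).
        + rewrite !nth_error_app1 by lia. destruct (nth_error pre j); simpl; auto.
          destruct (Nat.eqb_spec (length pre) j); auto; lia.
        + rewrite !nth_error_app2 by lia. destruct (j - length pre) eqn:E2; simpl.
          * replace j with (length pre) by lia. rewrite Nat.eqb_refl; auto.
          * destruct (nth_error ts n); simpl; auto. destruct (Nat.eqb_spec (length pre) j); auto; lia. }
      rewrite <- E. apply (rsteps_upd f a b Hab). rewrite nth_error_app2 by lia. rewrite Nat.sub_diag; reflexivity.
    - specialize (IH (pre ++ [b])). rewrite <- !app_assoc in IH. apply IH. }
  apply (H []).
Qed.

Lemma pstep_rsteps P s t : pstep P s t -> rs s t.
Proof.
  induction 1.
  - apply rt_refl.
  - apply rt_step. exists [], l, r, mu. auto.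
  - apply rsteps_args; [auto|]. intros j a b E1 E2.
    destruct (nth_error_lt_Some Ps j) as [Pj E3]. { rewrite H0. eapply nth_error_Some_lt; eauto. }
    eapply H2; eauto.
Qed.

Lemma pstep_subst (d : V -> tm) P s t : pstep P s t -> pstep P (subst d s) (subst d t).
Proof.
  induction 1.
  - apply pstep_refl.
  - rewrite !subst_comp. constructor; auto.
  - simpl. constructor; rewrite ?length_map; auto. intros j tj uj Pj E1 E2 E3.
    rewrite nth_error_map in E1, E2. destruct (nth_error ts j) eqn:F1; [|discriminate].
    destruct (nth_error us j) eqn:F2; [|discriminate]. inversion E1; inversion E2; subst. eauto.
Qed.

Lemma pstep_redex P s t : pstep P s t -> forall p, In p P -> exists l r mu, R l r /\
  subterm s p = Some (subst mu l) /\ subterm t p = Some (subst mu r).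
Proof.
  induction 1; intros p Hp.
  - destruct Hp.
  - destruct Hp as [<-|[]]. exists l, r, mu. auto.
  - apply in_blocks in Hp. destruct Hp as [j [Pj [q [E3 [Hq ->]]]]].
    destruct (nth_error_lt_Some ts j) as [tj E1]. { rewrite <- H0. eapply nth_error_Some_lt; eauto. }
    destruct (nth_error_lt_Some us j) as [uj E2]. { rewrite H. eapply nth_error_Some_lt; eauto. }
    rewrite !subterm_Fun, E1, E2. eapply H2; eauto.
Qed.

Lemma pstep_parallel P s t : pstep P s t -> pairwise_parallel P.
Proof.
  induction 1; intros a b Ha Hb Hne.
  - destruct Ha.
  - destruct Ha as [<-|[]]; destruct Hb as [<-|[]]; congruence.
  - apply in_blocks in Ha, Hb. destruct Ha as [j [Pj [q [E3 [Hq ->]]]]].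
    destruct Hb as [j' [Pj' [q' [E3' [Hq' ->]]]]].
    destruct (Nat.eq_dec j j') as [<-|Hj].
    + rewrite E3 in E3'; inversion E3'; subst.
      destruct (nth_error_lt_Some ts j) as [tj E1]. { rewrite <- H0. eapply nth_error_Some_lt; eauto. }
      destruct (nth_error_lt_Some us j) as [uj E2]. { rewrite H. eapply nth_error_Some_lt; eauto. }
      destruct (H2 _ _ _ _ E1 E2 E3 _ _ Hq Hq') as [N1 N2]. { congruence. }
      split; intro HH; apply prefix_cons in HH; auto.
    + split; intros [r E]; inversion E; auto.
Qed.

Lemma pstep_nodup P s t : pstep P s t -> NoDup P.
Proof.
  induction 1.
  - constructor.
  - constructor; [intros []|constructor].
  - apply NoDup_blocks. intros j Pj E3.
    destruct (nth_error_lt_Some ts j) as [tj E1]. { rewrite <- H0. eapply nth_error_Some_lt; eauto. }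
    destruct (nth_error_lt_Some us j) as [uj E2]. { rewrite H. eapply nth_error_Some_lt; eauto. }
    eauto.
Qed.

Lemma rule_vars l r (mu : V -> tm) : R l r -> incl (vars (subst mu r)) (vars (subst mu l)).
Proof.
  intros Hr x Hx. apply vars_subst in Hx. destruct Hx as [z [Hz Hx]]. apply vars_subst.
  exists z; split; auto. apply (proj2 (HTRS _ _ Hr)); auto.
Qed.

Lemma rstep_vars a b : rstep R a b -> incl (vars b) (vars a).
Proof.
  intros [p [l [r [mu [Hr [E ->]]]]]] x Hx. apply vars_replace with (w := subst mu l) in Hx; auto.
  apply in_app_or in Hx. destruct Hx; auto. apply (rule_vars l r mu Hr) in H; auto. eapply subterm_vars; eauto.
Qed.

Lemma rsteps_vars a b : rs a b -> incl (vars b) (vars a).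
Proof.
  induction 1. - apply rstep_vars; auto. - apply incl_refl. - eapply incl_tran; eauto.
Qed.

Lemma pstep_iva P s t : pstep P s t -> forall x, in_vars_at t P x -> in_vars_at s P x.
Proof.
  intros H x [p [w [Hp [E Hx]]]]. destruct (pstep_redex _ _ _ H p Hp) as [l [r [mu [Hr [E1 E2]]]]].
  rewrite E2 in E; inversion E; subst. exists p, (subst mu l). repeat split; auto. apply (rule_vars l r mu Hr); auto.
Qed.

Lemma iva_vars t P x : in_vars_at t P x -> In x (vars t).
Proof. intros [p [w [_ [E Hx]]]]. eapply subterm_vars; eauto. Qed.

Lemma iva_root s x : In x (vars s) -> in_vars_at s [[]] x.
Proof. intros H. exists [], s. simpl; auto. Qed.

Lemma msz_le_size P s t : pstep P s t -> msz s P <= size s.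
Proof.
  induction 1.
  - simpl; unfold msz; simpl; lia.
  - unfold msz, sz; simpl. lia.
  - rewrite msz_blocks. simpl. apply le_S. apply sum_nth_le.
    + rewrite length_mapi, length_map; auto.
    + intros j a b Ea Eb. rewrite nth_error_mapi in Ea. rewrite nth_error_map in Eb.
      destruct (nth_error Ps j) as [Pj|] eqn:E3; [|discriminate]. simpl in Ea.
      destruct (nth_error ts j) as [tj|] eqn:E1; [|discriminate]. inversion Eb; subst; clear Eb.
      destruct (nth_error_lt_Some us j) as [uj E2]. { rewrite H. eapply nth_error_Some_lt; eauto. }
      inversion Ea; subst. eauto.
Qed.

Lemma msz_block_le f ts Ps j tj Pj : nth_error ts j = Some tj -> nth_error Ps j = Some Pj ->
  msz tj Pj <= msz (Fun f ts) (blocks Ps).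
Proof.
  intros E1 E3. rewrite msz_blocks. apply (nth_le_sum _ j). rewrite nth_error_mapi, E3. simpl. rewrite E1; auto.
Qed.

Lemma msz_ext s s' P : (forall q, In q P -> subterm s q = subterm s' q) -> msz s P = msz s' P.
Proof. intro H. unfold msz. f_equal. apply map_ext_in. intros q Hq. unfold sz. rewrite H; auto. Qed.

Lemma pstep_remove P s t : pstep P s t -> forall p w, In p P -> subterm t p = Some w ->
  pstep (remove pdec p P) (replace_at p s w) t.
Proof.
  induction 1; intros p w Hp Ew.
  - destruct Hp.
  - destruct Hp as [<-|[]]. simpl in Ew. inversion Ew; subst. simpl. destruct (pdec [] []); [apply pstep_refl|congruence].
  - apply in_blocks in Hp. destruct Hp as [i [Pi [q [E3 [Hq ->]]]]].
    rewrite subterm_Fun in Ew. destruct (nth_error us i) as [ui|] eqn:E2; [|discriminate].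
    rewrite remove_blocks, replace_Fun. constructor.
    + rewrite length_mapi; auto.
    + rewrite !length_mapi; auto.
    + intros j tj uj Pj F1 F2 F3. rewrite nth_error_mapi in F1. pose proof (nth_error_mapi (fun j (P : list pos) => if i =? j then remove pdec q P else P) Ps 0 j) as G. rewrite F3 in G. simpl in F1, G. simpl in F1, F3.
      destruct (nth_error ts j) as [tj0|] eqn:G1; [|discriminate].
      destruct (nth_error Ps j) as [Pj0|] eqn:G3; [|discriminate]. simpl in F1, G.
      destruct (Nat.eqb_spec i j); subst.
      * inversion F1; inversion G; subst. rewrite E3 in G3; inversion G3; subst.
        rewrite E2 in F2; inversion F2; subst. eapply H2; eauto.
      * inversion F1; inversion G; subst. eapply H1; eauto.
Qed.

End P.

From Stdlib Require Import List Relations ClassicalEpsilon Classical Arith Lia.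
Import ListNotations.

Section D.
Context {F V : Type}.
Notation tm := (term F V).
Implicit Types (t w u s : tm) (ts us : list tm) (x y : V) (f : F) (p q : pos) (i j : nat).
Context (R : @rules F V).

Definition proj j (l : list (pos * option tm)) : list (pos * option tm) :=
  flat_map (fun po => match fst po with k :: q => if Nat.eqb j k then [(q, snd po)] else [] | [] => [] end) l.

Definition projP j (P : list pos) : list pos :=
  flat_map (fun p => match p with k :: q => if Nat.eqb j k then [q] else [] | [] => [] end) P.

Lemma in_projP j P q : In q (projP j P) <-> In (j :: q) P.
Proof.
  unfold projP. rewrite in_flat_map. split.
  - intros [p [Hp Hq]]. destruct p as [|k p]; [destruct Hq|].
    destruct (Nat.eqb_spec j k); [|destruct Hq]. destruct Hq as [<-|[]]. subst; auto.
  - intros H. exists (j :: q). rewrite Nat.eqb_refl. simpl; auto.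
Qed.

Lemma proj_map j (G : pos -> option tm) P :
  proj j (map (fun p => (p, G p)) P) = map (fun q => (q, G (j :: q))) (projP j P).
Proof.
  induction P as [|p P IH]; [reflexivity|]. simpl. rewrite IH, map_app. f_equal.
  destruct p as [|k q]; simpl; auto. destruct (Nat.eqb_spec j k); subst; reflexivity.
Qed.

Lemma fill_many_cons s po l : fill_many s (po :: l) =
  fill_many (match snd po with Some u => replace_at (fst po) s u | None => s end) l.
Proof. reflexivity. Qed.

Lemma fill_many_app s l1 l2 : fill_many s (l1 ++ l2) = fill_many (fill_many s l1) l2.
Proof. unfold fill_many. apply fold_left_app. Qed.

Lemma mapi_id {A} (l : list A) : mapi 0 (fun _ a => a) l = l.
Proof. apply list_ext_nth; intro j. rewrite nth_error_mapi. destruct (nth_error l j); reflexivity. Qed.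

Lemma fill_Fun f l : forall ts, (forall po, In po l -> fst po <> []) ->
  fill_many (Fun f ts) l = Fun f (mapi 0 (fun j tj => fill_many tj (proj j l)) ts).
Proof.
  induction l as [|[p o] l IH]; intros ts H.
  - simpl. unfold fill_many. simpl. rewrite mapi_id. reflexivity.
  - destruct p as [|k q]. { exfalso. apply (H ([], o)); simpl; auto. }
    rewrite fill_many_cons. simpl snd. simpl fst.
    destruct o as [u|].
    + rewrite replace_Fun, IH by (intros; apply H; simpl; auto). f_equal.
      apply list_ext_nth; intro j. rewrite !nth_error_mapi. destruct (nth_error ts j) as [tj|]; simpl; auto.
      f_equal. unfold proj at 2. simpl. rewrite fill_many_app. fold (proj j l). f_equal.
      rewrite (Nat.eqb_sym j k). destruct (Nat.eqb k j); reflexivity.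
    + rewrite IH by (intros; apply H; simpl; auto). f_equal.
      apply list_ext_nth; intro j. rewrite !nth_error_mapi. destruct (nth_error ts j) as [tj|]; simpl; auto.
      f_equal. unfold proj at 2. simpl. rewrite fill_many_app. fold (proj j l). f_equal.
      destruct (Nat.eqb j k); reflexivity.
Qed.

Lemma projP_app j l1 l2 : projP j (l1 ++ l2) = projP j l1 ++ projP j l2.
Proof. unfold projP. apply flat_map_app. Qed.

Lemma projP_cons j k (P0 : list pos) : projP j (map (cons k) P0) = if j =? k then P0 else [].
Proof. induction P0; simpl. - destruct (j =? k); auto. - unfold projP in *. simpl. rewrite IHP0. destruct (j =? k); auto. Qed.

Lemma projP_blocks_k j Ps : forall k, projP j (concat (mapi k (fun j P => map (cons j) P) Ps)) =
  if j <? k then [] else match nth_error Ps (j - k) with Some Pj => Pj | None => [] end.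
Proof.
  induction Ps as [|P0 Ps IH]; intros k.
  - rewrite mapi_nil. simpl. destruct (j <? k); auto. destruct (j - k); reflexivity.
  - rewrite mapi_cons. simpl. rewrite projP_app, IH, projP_cons.
    destruct (Nat.ltb_spec j k); destruct (Nat.eqb_spec j k); destruct (Nat.ltb_spec j (S k)); subst; try lia.
    all: simpl; try reflexivity.
    all: try (rewrite Nat.sub_diag; simpl; rewrite app_nil_r; reflexivity).
    all: try (replace (j - k) with (S (j - S k)) by lia; reflexivity).
Qed.

Lemma projP_blocks j Ps : projP j (blocks Ps) = match nth_error Ps j with Some Pj => Pj | None => [] end.
Proof. unfold blocks. rewrite projP_blocks_k. simpl. rewrite Nat.sub_0_r. reflexivity. Qed.

Lemma blocks_nonempty Ps p : In p (blocks Ps) -> p <> [].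
Proof. intros H. apply in_blocks in H. destruct H as [j [P [q [_ [_ ->]]]]]. discriminate. Qed.

Lemma pstep_fill P s t : pstep R P s t -> t = fill_many s (map (fun p => (p, subterm t p)) P).
Proof.
  induction 1.
  - reflexivity.
  - reflexivity.
  - rewrite fill_Fun. 2:{ intros po Hpo. apply in_map_iff in Hpo. destruct Hpo as [p [<- Hp]].
      apply blocks_nonempty in Hp. auto. }
    f_equal. apply list_ext_nth; intro j. rewrite nth_error_mapi. simpl.
    rewrite proj_map, projP_blocks.
    destruct (nth_error ts j) as [tj|] eqn:E1; simpl.
    + destruct (nth_error_lt_Some us j) as [uj E2]. { rewrite H. eapply nth_error_Some_lt; eauto. }
      destruct (nth_error_lt_Some Ps j) as [Pj E3]. { rewrite H0. eapply nth_error_Some_lt; eauto. }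
      rewrite E2, E3. f_equal. apply (H2 _ _ _ _ E1 E2 E3).
    + apply nth_error_None. apply nth_error_None in E1. lia.
Qed.

Lemma pstep_par P s t : pstep R P s t -> par_step R P s t.
Proof.
  intros H. split; [eapply pstep_parallel; eauto|]. split.
  - intros p Hp. eapply pstep_redex; eauto.
  - apply pstep_fill; auto.
Qed.

Lemma par_pstep s : forall P t, par_step R P s t -> exists P', pstep R P' s t /\ forall p, In p P <-> In p P'.
Proof.
  induction s as [x|f ts IH] using term_ind'; intros P t [Hpar [Hred Heq]].
  - destruct (classic (In [] P)) as [Hn|Hn].
    + destruct (Hred _ Hn) as [l [r [mu [Hr [E1 E2]]]]]. simpl in E1, E2. inversion E1; inversion E2; subst.
      rewrite H0. exists [[]]. split; [constructor; auto|].
      intros p. split; [|intros [<-|[]]; auto]. intros Hp. destruct (pdec p []) as [->|Hne]; [left; auto|].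
      exfalso. destruct (Hpar _ _ Hp Hn Hne) as [_ HH]. apply HH, prefix_nil.
    + assert (P = []). { destruct P as [|p P]; auto. exfalso. destruct (Hred p (or_introl eq_refl)) as [l [r [mu [_ [E _]]]]].
        destruct p; [apply Hn; left; auto|]. discriminate. }
      subst. simpl in Heq. unfold fill_many in Heq. simpl in Heq. subst. exists []. split; [constructor|]. tauto.
  - destruct (classic (In [] P)) as [Hn|Hn].
    + destruct (Hred _ Hn) as [l [r [mu [Hr [E1 E2]]]]]. simpl in E1, E2. inversion E1; inversion E2; subst.
      rewrite H0. exists [[]]. split; [constructor; auto|].
      intros p. split; [|intros [<-|[]]; auto]. intros Hp. destruct (pdec p []) as [->|Hne]; [left; auto|].
      exfalso. destruct (Hpar _ _ Hp Hn Hne) as [_ HH]. apply HH, prefix_nil.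
    + assert (Hne : forall p, In p P -> p <> []). { intros p Hp E; subst; auto. }
      rewrite fill_Fun in Heq. 2:{ intros po Hpo. apply in_map_iff in Hpo. destruct Hpo as [p [<- Hp]]. simpl; auto. }
      set (us := mapi 0 _ ts) in Heq.
      assert (Hus : forall j tj, nth_error ts j = Some tj -> exists uj, nth_error us j = Some uj /\
         par_step R (projP j P) tj uj).
      { intros j tj E1. exists (fill_many tj (proj j (map (fun p => (p, subterm t p)) P))). split.
        { unfold us. rewrite nth_error_mapi, E1. reflexivity. }
        assert (Hst : forall q uj, nth_error us j = Some uj -> subterm t (j :: q) = subterm uj q).
        { intros q uj E2. rewrite Heq, subterm_Fun, E2. reflexivity. }
        assert (E2 : nth_error us j = Some (fill_many tj (proj j (map (fun p => (p, subterm t p)) P)))).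
        { unfold us. rewrite nth_error_mapi, E1. reflexivity. }
        split; [|split].
        - intros a b Ha Hb Hab. apply in_projP in Ha, Hb.
          destruct (Hpar _ _ Ha Hb) as [N1 N2]. { congruence. }
          split; intro HH; [apply N1|apply N2]; apply prefix_cons; auto.
        - intros q Hq. apply in_projP in Hq. destruct (Hred _ Hq) as [l [r [mu [Hr [G1 G2]]]]].
          exists l, r, mu. split; auto. rewrite subterm_Fun, E1 in G1. split; auto.
          rewrite <- (Hst q _ E2). auto.
        - rewrite proj_map at 1. f_equal. apply map_ext. intro q. rewrite (Hst q _ E2). reflexivity. }
      assert (Hex : forall j, j < length ts -> exists Pj, forall tj uj, nth_error ts j = Some tj ->
          nth_error us j = Some uj -> pstep R Pj tj uj /\ forall q, In q (projP j P) <-> In q Pj).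
      { intros j Hj. destruct (nth_error_lt_Some ts j Hj) as [tj E1].
        destruct (Hus j tj E1) as [uj [E2 Hps]]. destruct (IH tj (nth_error_In _ _ E1) _ _ Hps) as [Pj [H1 H2]].
        exists Pj. intros tj' uj' E1' E2'. rewrite E1 in E1'; rewrite E2 in E2'. injection E1' as <-. injection E2' as <-. auto. }
      apply ex_list in Hex. destruct Hex as [Ps [HlPs HPs]].
      assert (Hlus : length us = length ts) by (unfold us; apply length_mapi).
      exists (blocks Ps). rewrite Heq. split.
      * constructor; auto. intros j tj uj Pj E1 E2 E3. apply (HPs j Pj E3); auto.
      * intros p. rewrite in_blocks. split.
        -- intros Hp. destruct p as [|j q]; [exfalso; apply (Hne _ Hp); auto|].
           destruct (Hred _ Hp) as [l [r [mu [_ [G1 _]]]]]. rewrite subterm_Fun in G1.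
           destruct (nth_error ts j) as [tj|] eqn:E1; [|discriminate].
           destruct (nth_error_lt_Some us j) as [uj E2]. { rewrite Hlus. eapply nth_error_Some_lt; eauto. }
           destruct (nth_error_lt_Some Ps j) as [Pj E3]. { rewrite HlPs. eapply nth_error_Some_lt; eauto. }
           exists j, Pj, q. split; auto. split; auto. apply (HPs j Pj E3 tj uj E1 E2). apply in_projP; auto.
        -- intros [j [Pj [q [E3 [Hq ->]]]]].
           destruct (nth_error_lt_Some ts j) as [tj E1]. { rewrite <- HlPs. eapply nth_error_Some_lt; eauto. }
           destruct (nth_error_lt_Some us j) as [uj E2]. { rewrite Hlus. eapply nth_error_Some_lt; eauto. }
           apply in_projP. apply (HPs j Pj E3 tj uj E1 E2). auto.
Qed.

End D.

From Stdlib Require Import List Relations ClassicalEpsilon Classical Arith Lia.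
Import ListNotations.

Section E.
Context {F V : Type}.
Notation tm := (term F V).
Implicit Types (t w u s a b : tm) (ts us : list tm) (x y : V) (f : F) (p q : pos) (i j : nat).

Definition eqV (x y : V) : {x = y} + {x <> y} := excluded_middle_informative _.

Definition swap (a b x : V) : V := if eqV x a then b else if eqV x b then a else x.

Lemma swap_invol (a b x : V) : swap a b (swap a b x) = x.
Proof.
  unfold swap. destruct (eqV x a); subst.
  - destruct (eqV b a); subst; [destruct (eqV a a); congruence|]. destruct (eqV b b); congruence.
  - destruct (eqV x b); subst.
    + destruct (eqV a a); congruence.
    + destruct (eqV x a); [congruence|]. destruct (eqV x b); congruence.
Qed.

Lemma renaming_id : renaming (fun x : V => x).
Proof. exists (fun x => x); auto. Qed.

Lemma renaming_comp (r1 r2 : V -> V) : renaming r1 -> renaming r2 -> renaming (fun x => r2 (r1 x)).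
Proof.
  intros [i1 [A1 B1]] [i2 [A2 B2]]. exists (fun x => i1 (i2 x)). split; intros x.
  - rewrite A2, A1; auto. - rewrite B1, B2; auto.
Qed.

Lemma renaming_swap (a b : V) : renaming (swap a b).
Proof. exists (swap a b). split; intros; apply swap_invol. Qed.

Context (Vinf : forall l : list V, exists x, ~ In x l).

Lemma fresh_renaming (xs A : list V) : exists rho, renaming rho /\ forall x, In x xs -> ~ In (rho x) A.
Proof.
  induction xs as [|x xs IH].
  - exists (fun x => x). split; [apply renaming_id|]. intros x [].
  - destruct IH as [rho' [Hr Hn]]. destruct (Vinf (A ++ map rho' xs ++ [rho' x])) as [y Hy].
    exists (fun z => swap (rho' x) y (rho' z)). split.
    + apply renaming_comp; auto. apply renaming_swap.
    + intros z Hz. unfold swap. destruct (eqV (rho' z) (rho' x)).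
      * intro; apply Hy; apply in_or_app; auto.
      * destruct (eqV (rho' z) y).
        -- exfalso. destruct Hz as [->|Hz]; [congruence|]. apply Hy. apply in_or_app; right; apply in_or_app; left.
           subst. apply in_map; auto.
        -- destruct Hz as [->|Hz]; [congruence|]. auto.
Qed.

Definition unifies (sg : V -> tm) (E : list (tm * tm)) := forall a b, In (a, b) E -> subst sg a = subst sg b.
Definition evars (E : list (tm * tm)) := flat_map (fun e => vars (fst e) ++ vars (snd e)) E.
Definition esize (E : list (tm * tm)) := list_sum (map (fun e => size (fst e) + size (snd e)) E).
Definition nv E := length (nodup eqV (evars E)).
Definition mgu_prop sg E := unifies sg E /\ forall tau, unifies tau E -> exists d, forall x, tau x = subst d (sg x).

Lemma size_subst_var x b (tau : V -> tm) : In x (vars b) -> size (tau x) <= size (subst tau b).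
Proof.
  induction b as [y|f ts IH] using term_ind'; intros H.
  - destruct H as [->|[]]; simpl; auto.
  - apply vars_Fun in H. destruct H as [a [Ha Hx]]. specialize (IH a Ha Hx).
    pose proof (size_arg f (map (subst tau) ts) (subst tau a) (in_map _ _ _ Ha)). simpl in *. lia.
Qed.

Lemma occurs x b (tau : V -> tm) : In x (vars b) -> b <> Var x -> size (tau x) < size (subst tau b).
Proof.
  intros H Hne. destruct b as [y|f ts].
  - destruct H as [->|[]]; congruence.
  - apply vars_Fun in H. destruct H as [a [Ha Hx]]. pose proof (size_subst_var x a tau Hx).
    pose proof (size_arg f (map (subst tau) ts) (subst tau a) (in_map _ _ _ Ha)). simpl in *. lia.
Qed.

Lemma unifies_cons sg a b E : unifies sg ((a, b) :: E) <-> subst sg a = subst sg b /\ unifies sg E.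
Proof.
  unfold unifies. split.
  - intros H. split; [apply H; left; auto|]. intros; apply H; right; auto.
  - intros [H1 H2] a' b' [E'|E']; [inversion E'; subst; auto|auto].
Qed.

Lemma unifies_combine sg : forall as_ bs, length as_ = length bs ->
  (unifies sg (combine as_ bs) <-> map (subst sg) as_ = map (subst sg) bs).
Proof.
  induction as_ as [|a as_ IH]; intros [|b bs] Hl; simpl in Hl; try discriminate.
  - simpl. split; auto. intros _ a b [].
  - simpl. rewrite unifies_cons, IH by lia. split; [intros [-> ->]; auto|intros E; inversion E; auto].
Qed.

Lemma evars_combine : forall as_ bs, length as_ = length bs -> forall x,
  In x (evars (combine as_ bs)) <-> In x (flat_map vars as_ ++ flat_map vars bs).
Proof.
  induction as_ as [|a as_ IH]; intros [|b bs] Hl x; simpl in Hl; try discriminate.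
  - simpl. tauto.
  - simpl. rewrite !in_app_iff. unfold evars in IH. rewrite IH by lia. rewrite !in_app_iff. tauto.
Qed.

Lemma esize_combine : forall as_ bs, length as_ = length bs ->
  esize (combine as_ bs) = list_sum (map size as_) + list_sum (map size bs).
Proof.
  induction as_ as [|a as_ IH]; intros [|b bs] Hl; simpl in Hl; try discriminate; auto.
  specialize (IH bs ltac:(lia)). unfold esize in *. simpl. transitivity (size a + size b + (list_sum (map size as_) + list_sum (map size bs))); [f_equal; exact IH | lia].
Qed.

Lemma nv_eq E1 E2 : (forall x, In x (evars E1) <-> In x (evars E2)) -> nv E1 = nv E2.
Proof.
  intros H. unfold nv. apply Nat.le_antisymm; apply nodup_len_le; intros x; apply H.
Qed.

Lemma mgu_elim x b E :
  (forall E', nv E' < nv ((Var x, b) :: E) -> (exists tau, unifies tau E') -> exists sg, mgu_prop sg E') ->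
  ~ In x (vars b) -> (exists tau, unifies tau ((Var x, b) :: E)) -> exists sg, mgu_prop sg ((Var x, b) :: E).
Proof.
  intros IH Hx [tau Htau].
  set (th := fun y => if eqV y x then b else Var y).
  set (E2 := map (fun e => (subst th (fst e), subst th (snd e))) E).
  assert (Key : forall (tau0 : V -> tm), tau0 x = subst tau0 b -> forall t, subst tau0 (subst th t) = subst tau0 t).
  { intros tau0 Ht t. rewrite subst_comp. apply subst_ext. intros y _. unfold th. destruct (eqV y x); subst; auto. }
  assert (Hb : subst th b = b).
  { rewrite <- (subst_id b) at 2. apply subst_ext. intros y Hy. unfold th. destruct (eqV y x); subst; auto. contradiction. }
  assert (HE2 : forall tau, unifies tau ((Var x, b) :: E) -> unifies tau E2).
  { intros tau0 Hu. apply unifies_cons in Hu. destruct Hu as [H1 H2]. intros a c Hac.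
    unfold E2 in Hac. apply in_map_iff in Hac. destruct Hac as [[a0 c0] [Eq Hin]]. inversion Eq; subst.
    simpl in H1. rewrite !Key; auto. }
  assert (Hlt : nv E2 < nv ((Var x, b) :: E)).
  { unfold nv. apply nodup_len_lt with (x := x).
    - intros y Hy. unfold E2, evars in Hy. apply in_flat_map in Hy. destruct Hy as [[a c] [Hac Hy]].
      apply in_map_iff in Hac. destruct Hac as [[a0 c0] [Eq Hin]]. inversion Eq; subst. simpl in Hy.
      simpl. right. apply in_or_app.
      assert (forall t, In y (vars (subst th t)) -> In t (map fst E ++ map snd E) -> In y (vars b) \/ In y (evars E)).
      { intros t Hyt Ht. apply vars_subst in Hyt. destruct Hyt as [z [Hz Hyz]]. unfold th in Hyz.
        destruct (eqV z x); auto. destruct Hyz as [->|[]]. right. unfold evars. apply in_flat_map.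
        apply in_app_or in Ht. destruct Ht as [Ht|Ht]; apply in_map_iff in Ht; destruct Ht as [[a1 c1] [<- Hin1]];
          exists (a1, c1); split; auto; apply in_or_app; auto. }
      apply in_app_or in Hy. destruct Hy as [Hy|Hy]; apply H in Hy; auto; apply in_or_app.
      + left; apply in_map_iff; exists (a0, c0); auto.
      + right; apply in_map_iff; exists (a0, c0); auto.
    - simpl; auto.
    - intro Hy. unfold E2, evars in Hy. apply in_flat_map in Hy. destruct Hy as [[a c] [Hac Hy]].
      apply in_map_iff in Hac. destruct Hac as [[a0 c0] [Eq Hin]]. inversion Eq; subst. simpl in Hy.
      assert (forall t, ~ In x (vars (subst th t))).
      { intros t Hyt. apply vars_subst in Hyt. destruct Hyt as [z [Hz Hyz]]. unfold th in Hyz.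
        destruct (eqV z x); auto. destruct Hyz as [->|[]]. auto. }
      apply in_app_or in Hy. destruct Hy; eapply H; eauto. }
  destruct (IH E2 Hlt (ex_intro _ tau (HE2 tau Htau))) as [sg' [Hu' Hm']].
  exists (fun y => subst sg' (th y)). split.
  - apply unifies_cons. split.
    + simpl. unfold th at 1. destruct (eqV x x); [|congruence]. rewrite <- subst_comp, Hb. auto.
    + intros a c Hac. rewrite <- !subst_comp. apply Hu'. unfold E2. apply in_map_iff. exists (a, c); auto.
  - intros tau' Ht'. destruct (Hm' tau' (HE2 tau' Ht')) as [d Hd]. exists d. intros y.
    apply unifies_cons in Ht'. destruct Ht' as [H1 _]. simpl in H1.
    transitivity (subst tau' (subst th (Var y))); [symmetry; apply Key; auto|]. rewrite subst_comp; simpl. rewrite subst_comp. apply subst_ext. intros z _. auto.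
Qed.


Lemma unifies_app sg l1 l2 : unifies sg (l1 ++ l2) <-> unifies sg l1 /\ unifies sg l2.
Proof.
  unfold unifies. split.
  - intros H; split; intros; apply H; apply in_or_app; auto.
  - intros [H1 H2] a b Hab. apply in_app_or in Hab. destruct Hab; auto.
Qed.

Lemma mgu_list : forall n m E, nv E < n -> esize E < m -> (exists tau, unifies tau E) -> exists sg, mgu_prop sg E.
Proof.
  induction n as [|n IHn]; [intros; lia|]. induction m as [|m IHm]; [intros; lia|].
  intros E Hn Hm [tau Ht].
  assert (IHe : forall a0 b0 E0, nv ((a0, b0) :: E0) < S n -> forall E', nv E' < nv ((a0, b0) :: E0) ->
      (exists tau, unifies tau E') -> exists sg, mgu_prop sg E').
  { intros a0 b0 E0 H0 E' H1 H2. apply (IHn (S (esize E')) E'); auto; lia. }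
  destruct E as [|[a b] E].
  - exists (fun x => Var x). split; [intros a b []|]. intros tau' _. exists tau'. intros; reflexivity.
  - assert (Hsz : esize E < m). { unfold esize in *. simpl in Hm. pose proof (size_pos a). lia. }
    assert (Hnv : nv E < S n). { eapply Nat.le_lt_trans; [|exact Hn]. unfold nv. apply nodup_len_le.
      intros z Hz. simpl. apply in_or_app; auto. }
    destruct a as [x|f as_], b as [y|g bs].
    + destruct (eqV x y) as [<-|Hxy].
      * destruct (IHm E Hnv Hsz) as [sg [Hu Hmg]]. { exists tau. intros a b Hab; apply Ht; right; auto. }
        exists sg. split. { apply unifies_cons; split; auto. }
        intros tau' Ht'. apply Hmg. apply unifies_cons in Ht'. tauto.
      * apply mgu_elim; [apply (IHe _ _ _ Hn)| |exists tau; auto]. intros [->|[]]; congruence.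
    + destruct (classic (In x (vars (Fun g bs)))) as [Hin|Hnin].
      * exfalso. pose proof (occurs x (Fun g bs) tau Hin ltac:(discriminate)).
        rewrite <- (proj1 (proj1 (unifies_cons _ _ _ _) Ht)) in H. simpl in H. lia.
      * apply mgu_elim; [apply (IHe _ _ _ Hn)|auto|exists tau; auto].
    + assert (Hsw : forall sg, unifies sg ((Fun f as_, Var y) :: E) <-> unifies sg ((Var y, Fun f as_) :: E)).
      { intros sg. rewrite !unifies_cons. split; intros [H1 H2]; auto. }
      assert (Hnvs : nv ((Var y, Fun f as_) :: E) = nv ((Fun f as_, Var y) :: E)).
      { apply nv_eq. intros z. unfold evars. simpl. rewrite !in_app_iff. simpl. tauto. }
      destruct (classic (In y (vars (Fun f as_)))) as [Hin|Hnin].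
      * exfalso. pose proof (occurs y (Fun f as_) tau Hin ltac:(discriminate)).
        rewrite (proj1 (proj1 (unifies_cons _ _ _ _) Ht)) in H. simpl in H. lia.
      * destruct (mgu_elim y (Fun f as_) E) as [sg [Hu Hmg]].
        -- rewrite Hnvs. apply (IHe _ _ _ Hn).
        -- auto.
        -- exists tau. apply Hsw; auto.
        -- exists sg. split; [apply Hsw; auto|]. intros tau' Ht'. apply Hmg. apply Hsw; auto.
    + pose proof (proj1 (proj1 (unifies_cons _ _ _ _) Ht)) as Heq. simpl in Heq. inversion Heq as [[Hfg Hmap]]. subst g.
      assert (Hl : length as_ = length bs). { rewrite <- (length_map (subst tau) as_), Hmap, length_map. auto. }
      assert (Hiff : forall sg, unifies sg (combine as_ bs ++ E) <-> unifies sg ((Fun f as_, Fun f bs) :: E)).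
      { intros sg. rewrite unifies_app, unifies_cons, unifies_combine by auto. simpl.
        split; [intros [-> H]; auto|intros [H1 H2]; inversion H1; auto]. }
      destruct (IHm (combine as_ bs ++ E)) as [sg [Hu Hmg]].
      * erewrite nv_eq; [exact Hn|]. intros z. unfold evars. rewrite flat_map_app. fold (evars (combine as_ bs)).
        fold (evars E). rewrite in_app_iff, evars_combine by auto. simpl. rewrite !in_app_iff. tauto.
      * unfold esize in *. rewrite map_app, list_sum_app. fold (esize (combine as_ bs)).
        rewrite esize_combine by auto. simpl in Hm. lia.
      * exists tau. apply Hiff; auto.
      * exists sg. split; [apply Hiff; auto|]. intros tau' Ht'. apply Hmg, Hiff; auto.
Qed.

Lemma mgu_exists a b (tau : V -> tm) : subst tau a = subst tau b -> exists sg, is_mgu sg a b.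
Proof.
  intros H. destruct (mgu_list (S (nv [(a, b)])) (S (esize [(a, b)])) [(a, b)]) as [sg [Hu Hm]]; auto.
  { exists tau. apply unifies_cons; split; auto. intros ? ? []. }
  exists sg. split. { apply Hu; left; auto. }
  intros tau' Ht'. apply Hm. apply unifies_cons; split; auto. intros ? ? [].
Qed.

End E.

From Stdlib Require Import List Relations ClassicalEpsilon Classical Arith Lia.
Import ListNotations.

Section F1.
Context {F V : Type}.
Notation tm := (term F V).
Implicit Types (t w u s : tm) (ts us : list tm) (x y : V) (f : F) (p q : pos) (i j : nat).
Context (Vinf : forall l : list V, exists x, ~ In x l).
Context (R : @rules F V) (HTRS : is_TRS R) (HLL : left_linear R) (HAPC : almost_parallel_closed R).

Lemma cp_lemma L1 R1 L2 R2 (mu1 mu2 : V -> tm) p g gs :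
  R L1 R1 -> R L2 R2 -> subterm L2 p = Some (Fun g gs) -> subterm (subst mu2 L2) p = Some (subst mu1 L1) ->
  (p = [] /\ subst mu1 R1 = subst mu2 R2) \/
  (exists tc uc (d : V -> tm), critical_pair R tc uc p /\
     subst d tc = replace_at p (subst mu2 L2) (subst mu1 R1) /\ subst d uc = subst mu2 R2).
Proof.
  intros Hr1 Hr2 Hg Es.
  destruct (fresh_renaming Vinf (vars L1 ++ vars R1) (vars L2 ++ vars R2)) as [rho [Hren Hfr]].
  pose proof Hren as [rho' [Hri1 Hri2]].
  set (l1 := subst (fun x => Var (rho x)) L1). set (r1 := subst (fun x => Var (rho x)) R1).
  assert (Hdisj : forall x, In x (vars l1 ++ vars r1) -> ~ In x (vars L2 ++ vars R2)).
  { intros x Hx. unfold l1, r1 in Hx. rewrite !vars_rename, <- map_app in Hx. apply in_map_iff in Hx.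
    destruct Hx as [y [<- Hy]]. auto. }
  set (tau := fun x => if excluded_middle_informative (In x (vars l1 ++ vars r1)) then mu1 (rho' x) else mu2 x).
  assert (Hin : forall t, incl (vars t) (vars L1 ++ vars R1) -> subst tau (subst (fun x => Var (rho x)) t) = subst mu1 t).
  { intros t Ht. rewrite subst_comp. apply subst_ext. intros y Hy. simpl. unfold tau.
    destruct (excluded_middle_informative _) as [_|Hn]; [rewrite Hri1; auto|].
    exfalso. apply Hn. unfold l1, r1. rewrite !vars_rename, <- map_app. apply in_map; auto. }
  assert (H1 : subst tau l1 = subst mu1 L1). { apply Hin. intros y Hy; apply in_or_app; auto. }
  assert (H1r : subst tau r1 = subst mu1 R1). { apply Hin. intros y Hy; apply in_or_app; auto. }
  assert (H2 : forall t, incl (vars t) (vars L2 ++ vars R2) -> subst tau t = subst mu2 t).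
  { intros t Ht. apply subst_ext. intros y Hy. unfold tau.
    destruct (excluded_middle_informative _) as [Hi|_]; auto. exfalso. apply (Hdisj y Hi). auto. }
  assert (HgL2 : incl (vars (Fun g gs)) (vars L2 ++ vars R2)).
  { intros y Hy. apply in_or_app; left. eapply subterm_vars; eauto. }
  assert (Hunif : subst tau l1 = subst tau (Fun g gs)).
  { rewrite H1, H2 by auto. pose proof (subterm_subst mu2 _ _ _ Hg). rewrite Es in H. inversion H; auto. }
  destruct (mgu_exists _ _ _ Hunif) as [sg [Hsg Hmg]].
  destruct (Hmg tau Hunif) as [d Hd].
  assert (Hsd : forall t, subst tau t = subst d (subst sg t)).
  { intros t. rewrite subst_comp. apply subst_ext. intros; auto. }
  assert (HL2 : incl (vars L2) (vars L2 ++ vars R2)) by (intros y Hy; apply in_or_app; auto).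
  assert (HR2 : incl (vars R2) (vars L2 ++ vars R2)) by (intros y Hy; apply in_or_app; auto).
  destruct (classic (p = [] /\ variant l1 r1 L2 R2)) as [[-> [rho2 [_ [El Er]]]]|Hnv].
  - left. split; auto. simpl in Hg. inversion Hg; subst L2.
    assert (HA : subst (fun x => tau (rho2 x)) (Fun g gs) = subst mu2 (Fun g gs)).
    { rewrite <- H2 by auto. rewrite <- Hunif, El, subst_comp. reflexivity. }
    rewrite <- H1r, Er, subst_comp. simpl. apply subst_ext. intros y Hy.
    apply (subst_ext_inv _ _ _ HA). apply (proj2 (HTRS _ _ Hr2)); auto.
  - right. exists (replace_at p (subst sg L2) (subst sg r1)), (subst sg R2), d. split; [|split].
    + exists l1, r1, L2, R2, sg, (Fun g gs).
      refine (conj _ (conj _ (conj _ (conj Hg (conj _ (conj (conj Hsg Hmg) (conj _ (conj eq_refl eq_refl)))))))).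
      * exists L1, R1. split; auto. exists rho. auto.
      * exists L2, R2. split; auto. exists (fun x => x). split; [apply renaming_id|]. rewrite !subst_id; auto.
      * exact Hdisj.
      * eauto.
      * intros Hp Hvar. apply Hnv; auto.
    + rewrite (replace_subst d _ p (subst sg (Fun g gs))) by (apply subterm_subst; auto).
      rewrite <- !Hsd, H1r, H2; auto.
    + rewrite <- Hsd. apply H2; auto.
Qed.

Definition Claim t P1 s P2 u :=
  (exists v P', rsteps R t v /\ pstep R P' u v /\ forall x, in_vars_at v P' x -> in_vars_at s P1 x) /\
  (exists v P', pstep R P' t v /\ rsteps R u v /\ forall x, in_vars_at v P' x -> in_vars_at s P2 x).

Lemma claim_sym t P1 s P2 u : Claim t P1 s P2 u -> Claim u P2 s P1 t.
Proof.
  intros [[v [P [A [B C]]]] [v' [P' [A' [B' C']]]]]. split; [exists v', P'|exists v, P]; auto.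
Qed.

Lemma claim_triv s P1 P2 u : pstep R P2 s u -> Claim s P1 s P2 u.
Proof.
  intros H. split.
  - exists u, []. split; [eapply pstep_rsteps; eauto|]. split; [apply (pstep_refl R)|]. intros x [p [_ [[] _]]].
  - exists u, P2. split; auto. split; [apply rt_refl|]. apply (pstep_iva R HTRS); auto.
Qed.

Lemma pstep_vars P s t : pstep R P s t -> incl (vars t) (vars s).
Proof. intros H. apply (rsteps_vars R HTRS). eapply pstep_rsteps; eauto. Qed.

Lemma root_half L1 R1 L2 R2 (mu1 mu2 : V -> tm) : R L1 R1 -> R L2 R2 -> subst mu1 L1 = subst mu2 L2 ->
  exists v P', pstep R P' (subst mu1 R1) v /\ rsteps R (subst mu2 R2) v.
Proof.
  intros Hr1 Hr2 E.
  destruct L2 as [z|g gs]. { exfalso. apply (proj1 (HTRS _ _ Hr2) z); auto. }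
  destruct (cp_lemma L1 R1 (Fun g gs) R2 mu1 mu2 [] g gs Hr1 Hr2 eq_refl) as [[_ E2]|[tc [uc [d [Hcp [Etc Euc]]]]]].
  { simpl. rewrite E; auto. }
  - exists (subst mu2 R2), []. rewrite E2. split; [apply (pstep_refl R)|apply rt_refl].
  - destruct (proj1 (HAPC _ _ _ Hcp) eq_refl) as [w [[Q HQ] Hw]].
    destruct (par_pstep R _ _ _ HQ) as [Q' [HQ' _]].
    exists (subst d w), Q'. split.
    + apply (pstep_subst R d) in HQ'. rewrite Etc in HQ'. exact HQ'.
    + rewrite <- Euc. apply rsteps_subst; auto.
Qed.

Lemma claim_rootroot L1 R1 L2 R2 (mu1 mu2 : V -> tm) : R L1 R1 -> R L2 R2 -> subst mu1 L1 = subst mu2 L2 ->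
  Claim (subst mu1 R1) [[]] (subst mu1 L1) [[]] (subst mu2 R2).
Proof.
  intros Hr1 Hr2 E. split.
  - destruct (root_half L2 R2 L1 R1 mu2 mu1 Hr2 Hr1 (eq_sym E)) as [v [P' [Hp Hr]]].
    exists v, P'. split; auto. split; auto. intros x Hx. apply iva_root. apply iva_vars in Hx.
    apply (rsteps_vars R HTRS) in Hr. apply Hr in Hx. apply (rule_vars R HTRS _ _ _ Hr1); auto.
  - destruct (root_half L1 R1 L2 R2 mu1 mu2 Hr1 Hr2 E) as [v [P' [Hp Hr]]].
    exists v, P'. split; auto. split; auto. intros x Hx. apply iva_root. apply iva_vars in Hx.
    apply (rsteps_vars R HTRS) in Hr. apply Hr in Hx. rewrite E. apply (rule_vars R HTRS _ _ _ Hr2); auto.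
Qed.

End F1.

From Stdlib Require Import List Relations ClassicalEpsilon Classical Arith Lia.
Import ListNotations.

Section F2.
Context {F V : Type}.
Notation tm := (term F V).
Implicit Types (t w u s : tm) (ts us : list tm) (x y : V) (f : F) (p q : pos) (i j : nat).
Context (R : @rules F V) (HTRS : is_TRS R).

Lemma NoDup_flat_map_elem {A B} (g : A -> list B) l a : NoDup (flat_map g l) -> In a l -> NoDup (g a).
Proof.
  induction l as [|c l IH]; intros H Ha; [destruct Ha|]. simpl in H. destruct Ha as [->|Ha].
  - eapply NoDup_app_remove_r; eauto.
  - apply IH; auto. eapply NoDup_app_remove_l; eauto.
Qed.

Lemma pstep_shape P s t : pstep R P s t ->
  t = s \/
  (P = [[]] /\ exists l r (mu : V -> tm), R l r /\ s = subst mu l /\ t = subst mu r) \/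
  (exists f ts us Ps, s = Fun f ts /\ t = Fun f us /\ P = blocks Ps /\ length us = length ts /\
     length Ps = length ts /\ forall j tj uj Pj, nth_error ts j = Some tj -> nth_error us j = Some uj ->
       nth_error Ps j = Some Pj -> pstep R Pj tj uj).
Proof.
  intros H. destruct H.
  - left; auto.
  - right; left. split; auto. exists l, r, mu; auto.
  - right; right. exists f, ts, us, Ps. repeat split; auto.
Qed.

Lemma pstep_linear l : NoDup (vars l) -> forall (mu : V -> tm) P t, pstep R P (subst mu l) t ->
  (forall p, In p P -> forall g gs, subterm l p <> Some (Fun g gs)) ->
  exists mu' : V -> tm, t = subst mu' l /\ forall x, In x (vars l) -> exists Px, pstep R Px (mu x) (mu' x) /\
    forall q, In q Px -> exists o, subterm l o = Some (Var x) /\ In (o ++ q) P.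
Proof.
  induction l as [z|g ls IH] using term_ind'; intros Hnd mu P t H Hnf.
  - exists (fun _ => t). split; auto. intros x [<-|[]]. exists P. split; auto.
    intros q Hq. exists []. auto.
  - destruct (pstep_shape _ _ _ H) as [Et|[[EP _]|[f [ts [us [Ps [Es [Et [EP [Hl1 [Hl2 Hj]]]]]]]]]]].
    +
      exists mu. split; auto. intros x Hx. exists []. split; [apply (pstep_refl R)|]. intros q [].
    + exfalso. apply (Hnf [] ltac:(rewrite EP; left; auto) g ls). reflexivity.
    + simpl in Es. inversion Es; subst f ts. clear Es. rewrite length_map in Hl1, Hl2.
      assert (Hex : forall j, j < length ls -> exists M : V -> tm, forall lj uj Pj, nth_error ls j = Some lj ->
          nth_error us j = Some uj -> nth_error Ps j = Some Pj ->
          uj = subst M lj /\ forall x, In x (vars lj) -> exists Px, pstep R Px (mu x) (M x) /\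
            forall q, In q Px -> exists o, subterm lj o = Some (Var x) /\ In (o ++ q) Pj).
      { intros j Hjl. destruct (nth_error_lt_Some ls j Hjl) as [lj E1].
        destruct (nth_error_lt_Some us j) as [uj E2]. { lia. }
        destruct (nth_error_lt_Some Ps j) as [Pj E3]. { lia. }
        assert (Hps : pstep R Pj (subst mu lj) uj). { apply (Hj j); auto. rewrite nth_error_map, E1; auto. }
        destruct (IH lj (nth_error_In _ _ E1)) with (mu := mu) (P := Pj) (t := uj) as [M [HM1 HM2]]; auto.
        { apply (NoDup_flat_map_elem vars ls); auto. eapply nth_error_In; eauto. }
        { intros p Hp g' gs' Eg. refine (Hnf (j :: p) _ g' gs' _).
          - rewrite EP. apply in_blocks. exists j, Pj, p; auto.
          - rewrite subterm_Fun, E1; exact Eg. }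
        exists M. intros lj' uj' Pj' E1' E2' E3'. rewrite E1 in E1'; rewrite E2 in E2'; rewrite E3 in E3'.
        injection E1' as <-; injection E2' as <-; injection E3' as <-. auto. }
      apply ex_list in Hex. destruct Hex as [Ms [HlMs HMs]].
      set (mu' := fun x => match excluded_middle_informative (exists j, j < length ls /\ exists lj, nth_error ls j = Some lj /\ In x (vars lj)) with
                           | left Hx => nth (proj1_sig (constructive_indefinite_description _ Hx)) Ms (fun y => Var y) x
                           | right _ => mu x end).
      assert (Hmu' : forall j lj M x, nth_error ls j = Some lj -> nth_error Ms j = Some M -> In x (vars lj) -> mu' x = M x).
      { intros j lj M x E1 EM Hx. unfold mu'. destruct (excluded_middle_informative _) as [Hex|Hn].
        - destruct (constructive_indefinite_description _ Hex) as [j' [Hj' [lj' [E1' Hx']]]]. simpl.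
          assert (j' = j). { eapply (NoDup_flat_map_disj vars ls Hnd); eauto. }
          subst j'. rewrite (nth_error_nth _ _ _ EM). auto.
        - exfalso. apply Hn. exists j. split; [eapply nth_error_Some_lt; eauto|]. eauto. }
      exists mu'. split.
      * rewrite Et. simpl. f_equal. apply list_ext_nth. intros j. rewrite nth_error_map.
        destruct (nth_error ls j) as [lj|] eqn:E1.
        -- destruct (nth_error_lt_Some us j) as [uj E2]. { rewrite Hl1. eapply nth_error_Some_lt; eauto. }
           destruct (nth_error_lt_Some Ps j) as [Pj E3]. { rewrite Hl2. eapply nth_error_Some_lt; eauto. }
           destruct (nth_error_lt_Some Ms j) as [M EM]. { rewrite HlMs. eapply nth_error_Some_lt; eauto. }
           destruct (HMs j M EM lj uj Pj E1 E2 E3) as [Heq _]. rewrite E2, Heq. simpl. f_equal. apply subst_ext.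
           intros x Hx. symmetry. eapply Hmu'; eauto.
        -- apply nth_error_None. apply nth_error_None in E1. lia.
      * intros x Hx. apply vars_Fun in Hx. destruct Hx as [lj [Hlj Hx]]. apply In_nth_error in Hlj.
        destruct Hlj as [j E1].
        destruct (nth_error_lt_Some us j) as [uj E2]. { rewrite Hl1. eapply nth_error_Some_lt; eauto. }
        destruct (nth_error_lt_Some Ps j) as [Pj E3]. { rewrite Hl2. eapply nth_error_Some_lt; eauto. }
        destruct (nth_error_lt_Some Ms j) as [M EM]. { rewrite HlMs. eapply nth_error_Some_lt; eauto. }
        destruct (HMs j M EM lj uj Pj E1 E2 E3) as [_ HM]. destruct (HM x Hx) as [Px [HP1 HP2]].
        exists Px. rewrite (Hmu' j lj M x E1 EM Hx). split; auto.
        intros q Hq. destruct (HP2 q Hq) as [o [Eo Ho]]. exists (j :: o). split.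
        -- rewrite subterm_Fun, E1; auto.
        -- rewrite EP. apply in_blocks. exists j, Pj, (o ++ q). auto.
Qed.

Lemma pstep_subst_ctx (Q : V -> list pos -> Prop) r : forall (mu mu' : V -> tm),
  (forall x, In x (vars r) -> exists Px, pstep R Px (mu x) (mu' x) /\ Q x Px) ->
  exists P', pstep R P' (subst mu r) (subst mu' r) /\ forall p, In p P' -> exists o x q Px,
    subterm r o = Some (Var x) /\ Q x Px /\ pstep R Px (mu x) (mu' x) /\ In q Px /\ p = o ++ q.
Proof.
  induction r as [z|g rs IH] using term_ind'; intros mu mu' H.
  - destruct (H z (or_introl eq_refl)) as [Px [H1 H2]]. exists Px. split; auto.
    intros p Hp. exists [], z, p, Px. auto.
  - assert (Hex : forall j, j < length rs -> exists Pj, forall rj, nth_error rs j = Some rj ->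
        pstep R Pj (subst mu rj) (subst mu' rj) /\ forall p, In p Pj -> exists o x q Px,
        subterm rj o = Some (Var x) /\ Q x Px /\ pstep R Px (mu x) (mu' x) /\ In q Px /\ p = o ++ q).
    { intros j Hj. destruct (nth_error_lt_Some rs j Hj) as [rj E1].
      destruct (IH rj (nth_error_In _ _ E1) mu mu') as [Pj HPj].
      { intros x Hx. apply H. apply vars_Fun. exists rj; split; auto. eapply nth_error_In; eauto. }
      exists Pj. intros rj' E1'. rewrite E1 in E1'. injection E1' as <-. auto. }
    apply ex_list in Hex. destruct Hex as [Ps [HlPs HPs]].
    exists (blocks Ps). split.
    + simpl. constructor; rewrite ?length_map; auto. intros j tj uj Pj E1 E2 E3.
      rewrite nth_error_map in E1, E2. destruct (nth_error rs j) as [rj|] eqn:F1; [|discriminate].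
      injection E1 as <-; injection E2 as <-. apply (HPs j Pj E3 rj F1).
    + intros p Hp. apply in_blocks in Hp. destruct Hp as [j [Pj [p' [E3 [Hp' ->]]]]].
      destruct (nth_error_lt_Some rs j) as [rj E1]. { rewrite <- HlPs. eapply nth_error_Some_lt; eauto. }
      destruct (proj2 (HPs j Pj E3 rj E1) p' Hp') as [o [x [q [Px [A1 [A2 [A3 [A4 ->]]]]]]]].
      exists (j :: o), x, q, Px. repeat split; auto. rewrite subterm_Fun, E1; auto.
Qed.

Lemma iva_blocks f ws Qs x : in_vars_at (Fun f ws) (blocks Qs) x <->
  exists j wj Qj, nth_error ws j = Some wj /\ nth_error Qs j = Some Qj /\ in_vars_at wj Qj x.
Proof.
  split.
  - intros [p [w [Hp [Ew Hx]]]]. apply in_blocks in Hp. destruct Hp as [j [Qj [q [E3 [Hq ->]]]]].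
    rewrite subterm_Fun in Ew. destruct (nth_error ws j) as [wj|] eqn:E1; [|discriminate].
    exists j, wj, Qj. repeat split; auto. exists q, w; auto.
  - intros [j [wj [Qj [E1 [E3 [q [w [Hq [Ew Hx]]]]]]]]]. exists (j :: q), w. split; [|split; auto].
    + apply in_blocks. exists j, Qj, q; auto.
    + rewrite subterm_Fun, E1; auto.
Qed.

Lemma decomp_half f ts us1 us2 Ps1 :
  length us1 = length ts -> length us2 = length ts -> length Ps1 = length ts ->
  (forall j tj u1 u2 Pa, nth_error ts j = Some tj -> nth_error us1 j = Some u1 -> nth_error us2 j = Some u2 ->
     nth_error Ps1 j = Some Pa -> exists v P', rsteps R u1 v /\ pstep R P' u2 v /\
       forall x, in_vars_at v P' x -> in_vars_at tj Pa x) ->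
  exists v P', rsteps R (Fun f us1) v /\ pstep R P' (Fun f us2) v /\
    forall x, in_vars_at v P' x -> in_vars_at (Fun f ts) (blocks Ps1) x.
Proof.
  intros Hl1 Hl2 Hl3 H.
  assert (Hex : forall j, j < length ts -> exists vP : tm * list pos, forall tj u1 u2 Pa,
     nth_error ts j = Some tj -> nth_error us1 j = Some u1 -> nth_error us2 j = Some u2 ->
     nth_error Ps1 j = Some Pa -> rsteps R u1 (fst vP) /\ pstep R (snd vP) u2 (fst vP) /\
       forall x, in_vars_at (fst vP) (snd vP) x -> in_vars_at tj Pa x).
  { intros j Hj. destruct (nth_error_lt_Some ts j Hj) as [tj E0].
    destruct (nth_error_lt_Some us1 j) as [u1 E1]. { lia. }
    destruct (nth_error_lt_Some us2 j) as [u2 E2]. { lia. }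
    destruct (nth_error_lt_Some Ps1 j) as [Pa E3]. { lia. }
    destruct (H j tj u1 u2 Pa E0 E1 E2 E3) as [v [P' HH]]. exists (v, P').
    intros tj' u1' u2' Pa' E0' E1' E2' E3'. rewrite E0 in E0'; rewrite E1 in E1'; rewrite E2 in E2'; rewrite E3 in E3'.
    injection E0' as <-; injection E1' as <-; injection E2' as <-; injection E3' as <-. auto. }
  apply ex_list in Hex. destruct Hex as [L [HlL HL]].
  exists (Fun f (map fst L)), (blocks (map snd L)).
  assert (Hget : forall j, j < length ts -> exists tj u1 u2 Pa vP, nth_error ts j = Some tj /\ nth_error us1 j = Some u1 /\
     nth_error us2 j = Some u2 /\ nth_error Ps1 j = Some Pa /\ nth_error L j = Some vP).
  { intros j Hj. destruct (nth_error_lt_Some ts j Hj) as [tj E0].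
    destruct (nth_error_lt_Some us1 j) as [u1 E1]. { lia. }
    destruct (nth_error_lt_Some us2 j) as [u2 E2]. { lia. }
    destruct (nth_error_lt_Some Ps1 j) as [Pa E3]. { lia. }
    destruct (nth_error_lt_Some L j) as [vP E4]. { lia. }
    exists tj, u1, u2, Pa, vP. auto. }
  split; [|split].
  - apply rsteps_args. { rewrite length_map; lia. } intros j a b Ea Eb. rewrite nth_error_map in Eb.
    destruct (Hget j) as [tj [u1 [u2 [Pa [vP [E0 [E1 [E2 [E3 E4]]]]]]]]]. { rewrite <- Hl1. eapply nth_error_Some_lt; eauto. }
    rewrite E4 in Eb. rewrite E1 in Ea. injection Ea as <-. injection Eb as <-.
    apply (HL j vP E4 tj u1 u2 Pa); auto.
  - constructor; rewrite ?length_map; try lia. intros j a b Pj Ea Eb Ec. rewrite nth_error_map in Eb, Ec.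
    destruct (Hget j) as [tj [u1 [u2 [Pa [vP [E0 [E1 [E2 [E3 E4]]]]]]]]]. { rewrite <- Hl2. eapply nth_error_Some_lt; eauto. }
    rewrite E4 in Eb, Ec. rewrite E2 in Ea. injection Ea as <-. injection Eb as <-. injection Ec as <-.
    apply (HL j vP E4 tj u1 u2 Pa); auto.
  - intros x Hx. apply iva_blocks in Hx. destruct Hx as [j [wj [Qj [Ea [Eb Hx]]]]].
    rewrite nth_error_map in Ea, Eb.
    destruct (Hget j) as [tj [u1 [u2 [Pa [vP [E0 [E1 [E2 [E3 E4]]]]]]]]].
    { rewrite <- HlL. destruct (nth_error L j) eqn:E; [eapply nth_error_Some_lt; eauto|discriminate]. }
    rewrite E4 in Ea, Eb. injection Ea as <-. injection Eb as <-.
    apply iva_blocks. exists j, tj, Pa. repeat split; auto. apply (HL j vP E4 tj u1 u2 Pa); auto.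
Qed.

End F2.

From Stdlib Require Import List Relations ClassicalEpsilon Classical Arith Lia.
Import ListNotations.

Section G.
Context {F V : Type}.
Notation tm := (term F V).
Implicit Types (t w u s : tm) (ts us : list tm) (x y : V) (f : F) (p q : pos) (i j : nat).
Context (Vinf : forall l : list V, exists x, ~ In x l).
Context (R : @rules F V) (HTRS : is_TRS R) (HLL : left_linear R) (HAPC : almost_parallel_closed R).

Lemma root_case n
  (IH : forall s' P1' P2' t' u', Nat.min (msz s' P1') (msz s' P2') < n -> pstep R P1' s' t' -> pstep R P2' s' u' ->
        Claim R t' P1' s' P2' u')
  L2 R2 (mu2 : V -> tm) P1 t :
  R L2 R2 -> pstep R P1 (subst mu2 L2) t -> (forall p, In p P1 -> p <> []) ->
  msz (subst mu2 L2) P1 <= n -> Claim R t P1 (subst mu2 L2) [[]] (subst mu2 R2).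
Proof.
  intros Hr2 H1 Hne Hn. set (s := subst mu2 L2) in *.
  destruct (classic (exists p, In p P1 /\ exists g gs, subterm L2 p = Some (Fun g gs))) as [[p [Hp [g [gs Hg]]]]|HB].
  - destruct (pstep_redex R _ _ _ H1 p Hp) as [L1 [R1 [mu1 [Hr1 [Es Et]]]]].
    destruct (cp_lemma Vinf R HTRS L1 R1 L2 R2 mu1 mu2 p g gs Hr1 Hr2 Hg Es) as [[Hp0 _]|[tc [uc [d [Hcp [Etc Euc]]]]]].
    { exfalso; apply (Hne p); auto. }
    destruct (proj2 (HAPC _ _ _ Hcp) (Hne p Hp)) as [Q HQ].
    destruct (par_pstep R _ _ _ HQ) as [Q' [HQ' _]].
    apply (pstep_subst R d) in HQ'. rewrite Etc, Euc in HQ'. fold s in HQ'.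
    set (s' := replace_at p s (subst mu1 R1)) in *.
    pose proof (pstep_remove R _ _ _ H1 p _ Hp Et) as Hrem. fold s' in Hrem.
    assert (Hsame : forall q, In q (remove pdec p P1) -> In q P1 /\ subterm s' q = subterm s q).
    { intros q Hq. apply in_remove in Hq. destruct Hq as [Hq Hqp]. split; auto.
      apply subterm_replace_par. apply (pstep_parallel R _ _ _ H1); auto. }
    assert (Hm : msz s' (remove pdec p P1) < n).
    { rewrite (msz_ext s' s) by (intros q Hq; apply Hsame; auto).
      pose proof (sum_remove pdec (sz s) P1 p (pstep_nodup R _ _ _ H1) Hp). unfold msz in *.
      unfold sz at 2 in H. rewrite Es in H. pose proof (size_pos (subst mu1 L1)). lia. }
    destruct (IH s' (remove pdec p P1) Q' t (subst mu2 R2) ltac:(lia) Hrem HQ') as [[v1 [P1' [A1 [B1 C1]]]] [v2 [P2' [A2 [B2 C2]]]]].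
    split.
    + exists v1, P1'. split; auto. split; auto. intros x Hx. apply C1 in Hx.
      destruct Hx as [q [w [Hq [Ew Hx]]]]. destruct (Hsame q Hq) as [Hq1 Hq2]. exists q, w.
      split; auto. rewrite <- Hq2; auto.
    + exists v2, P2'. split; auto. split; auto. intros x Hx. apply C2, iva_vars in Hx.
      apply iva_root. apply (vars_replace s p (subst mu1 L1)) in Hx; auto. apply in_app_or in Hx.
      destruct Hx as [Hx|Hx]; auto. apply (rule_vars R HTRS _ _ _ Hr1) in Hx. eapply subterm_vars; eauto.
  - assert (Hnf : forall p, In p P1 -> forall g gs, subterm L2 p <> Some (Fun g gs)).
    { intros p Hp g gs Eg. apply HB. eauto. }
    destruct (pstep_linear R L2 (HLL _ _ Hr2) mu2 P1 t H1 Hnf) as [mu' [Et Hx]].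
    set (Qx := fun x (Px : list pos) => forall q, In q Px -> exists o, subterm L2 o = Some (Var x) /\ In (o ++ q) P1).
    destruct (pstep_subst_ctx R Qx R2 mu2 mu') as [P' [HP' HPp]].
    { intros x Hx2. apply Hx. apply (proj2 (HTRS _ _ Hr2)); auto. }
    split.
    + exists (subst mu' R2), P'. split; [|split; auto].
      * apply rt_step. exists [], L2, R2, mu'. rewrite Et. auto.
      * intros y [p [w [Hp [Ew Hy]]]]. destruct (HPp p Hp) as [o [x [q [Px [Eo [HQ [HPx [Hq ->]]]]]]]].
        rewrite subterm_app, (subterm_subst mu' _ _ _ Eo) in Ew. simpl in Ew.
        assert (Hiv : in_vars_at (mu' x) Px y) by (exists q, w; auto).
        apply (pstep_iva R HTRS _ _ _ HPx) in Hiv. destruct Hiv as [q' [w' [Hq' [Ew' Hy']]]].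
        destruct (HQ q' Hq') as [o' [Eo' Ho']]. exists (o' ++ q'), w'. split; auto. split; auto.
        unfold s. rewrite subterm_app, (subterm_subst mu2 _ _ _ Eo'). simpl. auto.
    + exists (subst mu' R2), [[]]. split; [|split].
      * rewrite Et. constructor; auto.
      * eapply pstep_rsteps; eauto.
      * intros y Hy. apply iva_vars in Hy. apply iva_root. apply (pstep_vars R HTRS _ _ _ H1).
        rewrite Et. apply (rule_vars R HTRS _ _ _ Hr2); auto.
Qed.

Lemma main_claim : forall n k s P1 P2 t u, size s <= k -> Nat.min (msz s P1) (msz s P2) <= n ->
  pstep R P1 s t -> pstep R P2 s u -> Claim R t P1 s P2 u.
Proof.
  intros n. induction n as [n IHn] using lt_wf_ind. intros k. induction k as [|k IHk];
    intros s P1 P2 t u Hk Hn H1 H2.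
  { pose proof (size_pos s). lia. }
  assert (IH : forall s' P1' P2' t' u', Nat.min (msz s' P1') (msz s' P2') < n -> pstep R P1' s' t' ->
        pstep R P2' s' u' -> Claim R t' P1' s' P2' u').
  { intros s' P1' P2' t' u' Hlt. apply (IHn _ Hlt (size s')); auto. }
  destruct (pstep_shape R _ _ _ H1) as [Et|[[EP1 [L1 [R1 [mu1 [Hr1 [Es Et]]]]]]|[f [ts [us1 [Ps1 [Es [Et [EP1 [Hl1 [Hl1' Hj1]]]]]]]]]]].
  { subst t. apply claim_triv; auto. }
  all: destruct (pstep_shape R _ _ _ H2) as [Eu|[[EP2 [L2 [R2 [mu2 [Hr2 [Es2 Eu]]]]]]|[f' [ts' [us2 [Ps2 [Es2 [Eu [EP2 [Hl2 [Hl2' Hj2]]]]]]]]]]].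
  all: try (subst u; apply claim_sym, claim_triv; auto; fail).
  -
    subst t u P1 P2. rewrite Es. rewrite Es in Es2. apply (claim_rootroot Vinf R HTRS HAPC L1 R1 L2 R2 mu1 mu2); auto.
  -
    apply claim_sym. subst t P1. rewrite Es in H2. rewrite Es.
    apply (root_case n IH L1 R1 mu1 P2 u Hr1 H2).
    + intros p Hp. rewrite EP2 in Hp. apply blocks_nonempty in Hp; auto.
    + pose proof (msz_le_size R _ _ _ H2). rewrite <- Es in *.
      assert (msz s [[]] = size s) by (unfold msz, sz; simpl; lia). lia.
  -
    subst u P2. rewrite Es2 in H1. rewrite Es2.
    apply (root_case n IH L2 R2 mu2 P1 t Hr2 H1).
    + intros p Hp. rewrite EP1 in Hp. apply blocks_nonempty in Hp; auto.
    + pose proof (msz_le_size R _ _ _ H1). rewrite <- Es2 in *.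
      assert (msz s [[]] = size s) by (unfold msz, sz; simpl; lia). lia.
  -
    rewrite Es in Es2. injection Es2 as <- <-. subst s t u P1 P2.
    assert (Hcl : forall j tj u1 u2 Pa Pb, nth_error ts j = Some tj -> nth_error us1 j = Some u1 ->
       nth_error us2 j = Some u2 -> nth_error Ps1 j = Some Pa -> nth_error Ps2 j = Some Pb -> Claim R u1 Pa tj Pb u2).
    { intros j tj u1 u2 Pa Pb E0 E1 E2 E3 E4. apply (IHk tj Pa Pb u1 u2).
      - pose proof (size_arg f ts tj (nth_error_In _ _ E0)). lia.
      - pose proof (msz_block_le f ts Ps1 j tj Pa E0 E3). pose proof (msz_block_le f ts Ps2 j tj Pb E0 E4). lia.
      - eapply Hj1; eauto.
      - eapply Hj2; eauto. }
    split.
    + apply decomp_half; auto; try lia. intros j tj u1 u2 Pa E0 E1 E2 E3.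
      destruct (nth_error_lt_Some Ps2 j) as [Pb E4]. { rewrite Hl2'. eapply nth_error_Some_lt; eauto. }
      apply (Hcl j tj u1 u2 Pa Pb); auto.
    + destruct (decomp_half R f ts us2 us1 Ps2) as [v [P' [A [B C]]]]; auto; try lia.
      * intros j tj u2 u1 Pb E0 E2 E1 E4.
        destruct (nth_error_lt_Some Ps1 j) as [Pa E3]. { rewrite Hl1'. eapply nth_error_Some_lt; eauto. }
        destruct (Hcl j tj u1 u2 Pa Pb) as [_ [v [P' [A [B C]]]]]; auto. exists v, P'. auto.
      * exists v, P'. auto.
Qed.

End G.

Theorem lemma4 (F V : Type)
  (V_infinite : forall l : list V, exists x : V, ~ In x l)
  (R : @rules F V) :
  is_TRS R -> left_linear R -> almost_parallel_closed R ->
  forall (s t u : term F V) (P1 P2 : list pos),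
    par_step R P1 s t -> par_step R P2 s u ->
    (exists v1 P1', rsteps R t v1 /\ par_step R P1' u v1 /\
        (forall x, in_vars_at v1 P1' x -> in_vars_at s P1 x)) /\
    (exists v2 P2', par_step R P2' t v2 /\ rsteps R u v2 /\
        (forall x, in_vars_at v2 P2' x -> in_vars_at s P2 x)).
Proof.
  intros HTRS HLL HAPC s t u P1 P2 H1 H2.
  destruct (par_pstep R _ _ _ H1) as [Q1 [HQ1 HI1]].
  destruct (par_pstep R _ _ _ H2) as [Q2 [HQ2 HI2]].
  destruct (main_claim V_infinite R HTRS HLL HAPC _ _ s Q1 Q2 t u (le_n _) (le_n _) HQ1 HQ2)
    as [[v1 [P1' [A1 [B1 C1]]]] [v2 [P2' [A2 [B2 C2]]]]].
  split.
  - exists v1, P1'. split; auto. split; [apply pstep_par; auto|]. intros x Hx.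
    destruct (C1 x Hx) as [p [w [Hp Hw]]]. exists p, w. split; auto. apply HI1; auto.
  - exists v2, P2'. split; [apply pstep_par; auto|]. split; auto. intros x Hx.
    destruct (C2 x Hx) as [p [w [Hp Hw]]]. exists p, w. split; auto. apply HI2; auto.
Qed.
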